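(* Let $n\geq 4$ and let $c$ be an exact $4$-coloring of $\mathcal{B}_n$ with $c(\emptyset)\neq c([n])$. Then $\mathcal{B}_n$ contains no rainbow induced copy of $\mathcal{B}_2$ if and only if $c$ is of Type 2, Type 3-1, Type 3-2, Type 4-1 or Type 4-2.
   Context: $\mathcal{B}_n$ is the Boolean lattice of subsets of $[n]$ under inclusion. For $X\subseteq Y$: $\mathcal{B}_{[X,Y]}=\{Z:X\subseteq Z\subseteq Y\}$, and $\mathcal{B}_{(X,Y)}$, $\mathcal{B}_{(X,Y]}$, $\mathcal{B}_{[X,Y)}$ are defined analogously with strict inclusion at the open ends. For $X\subsetneq Y$ define $\mathcal{B}^{Y\uparrow}_{(X,[n]]}=\{Z\in\mathcal{B}_{(X,[n]]}: Z\cap(Y\setminus X)\neq\emptyset\}$ and $\mathcal{B}^{X\downarrow}_{[\emptyset,Y)}=\{Z\in\mathcal{B}_{[\emptyset,Y)}: Y\setminus X\not\subseteq Z\}$. An exact $k$-coloring is a surjective map $c:\mathcal{B}_n\to[k]$. A rainbow induced copy of $\mathcal{B}_2$ is four sets $W_1\subsetneq W_2,W_3\subsetneq W_4$ with $W_2,W_3$ incomparable and pairwise distinct colors. ''Families $\mathcal{F}_1,\dots,\mathcal{F}_r$ are monochromatically colored with distinct colors'' means each is monochromatic and no two sets from different families share a color. In Types 2, 3-1, 3-2 there are $X_0,Y_0$ with $\emptyset\subsetneq X_0\subsetneq Y_0\subsetneq[n]$, $|Y_0|\ge|X_0|+2$. Type 2: the families $\mathcal{B}_{[\emptyset,Y_0]}\setminus\mathcal{B}_{[X_0,Y_0]}$,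 $\{X_0,Y_0\}$, $\mathcal{B}_{(X_0,Y_0)}$, $\mathcal{B}_{[X_0,[n]]}\setminus\mathcal{B}_{[X_0,Y_0]}$ are monochromatically colored with distinct colors, and each set in $\mathcal{B}_n\setminus(\mathcal{B}_{[\emptyset,Y_0]}\cup\mathcal{B}_{[X_0,[n]]})$ has the color of the first or the last family. Type 3-1: the families $\mathcal{B}_{[\emptyset,Y_0]}\setminus\mathcal{B}_{[X_0,Y_0]}$, $\{X_0\}\cup(\mathcal{B}^{Y_0\uparrow}_{(X_0,[n]]}\setminus\mathcal{B}_{(X_0,Y_0]})$, $\mathcal{B}_{(X_0,Y_0)}$, $\{Y_0\}$ are monochromatically colored with distinct colors, and each set in $\mathcal{B}_n\setminus(\mathcal{B}_{[\emptyset,Y_0]}\cup\mathcal{B}^{Y_0\uparrow}_{(X_0,[n]]})$ has the color of the first or the second family. Type 3-2: the families $\mathcal{B}_{[X_0,[n]]}\setminus\mathcal{B}_{[X_0,Y_0]}$, $\{Y_0\}\cup(\mathcal{B}^{X_0\downarrow}_{[\emptyset,Y_0)}\setminus\mathcal{B}_{[X_0,Y_0)})$, $\mathcal{B}_{(X_0,Y_0)}$, $\{X_0\}$ are monochromatically colored with distinct colors, and each set in $\mathcal{B}_n\setminus(\mathcal{B}_{[X_0,[n]]}\cup\mathcal{B}^{X_0\downarrow}_{[\emptyset,Y_0)})$ has the color of the first or the second family. Type 4-1: there are a set $X_0$ with $1\le|X_0|\le n-2$ and a nonempty family $\mathcal{Y}_0\subseteq\mathcal{B}_{(X_0,[n]]}$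 such that the families $\bigcup_{Y\in\mathcal{Y}_0}(\mathcal{B}_{[\emptyset,Y)}\setminus\mathcal{B}_{[X_0,Y)})$, $\{X_0\}$, $\mathcal{B}_{(X_0,[n]]}\setminus\mathcal{Y}_0$, $\mathcal{Y}_0$ are monochromatically colored with distinct colors, and each set in $\mathcal{B}_n\setminus(\mathcal{B}_{[X_0,[n]]}\cup\bigcup_{Y\in\mathcal{Y}_0}\mathcal{B}_{[\emptyset,Y)})$ has the color of the first or the third family. Type 4-2: there are a set $Y_0$ with $2\le|Y_0|\le n-1$ and a nonempty family $\mathcal{X}_0\subseteq\mathcal{B}_{(\emptyset,Y_0)}$ such that the families $\bigcup_{X\in\mathcal{X}_0}(\mathcal{B}_{(X,[n]]}\setminus\mathcal{B}_{(X,Y_0]})$, $\{Y_0\}$, $\mathcal{B}_{[\emptyset,Y_0)}\setminus\mathcal{X}_0$, $\mathcal{X}_0$ are monochromatically colored with distinct colors, and each set in $\mathcal{B}_n\setminus(\mathcal{B}_{[\emptyset,Y_0]}\cup\bigcup_{X\in\mathcal{X}_0}\mathcal{B}_{(X,[n]]})$ has the color of the first or the third family. *)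

(* Defs.v *)
(* Ground set [n] is the finType 'I_n; B_n is {set 'I_n}. *)
From mathcomp Require Import all_boot.
Set Implicit Arguments. Unset Strict Implicit. Unset Printing Implicit Defensive.

Section Defs.
Variables (T : finType) (k : nat).
Implicit Types (X Y Z : {set T}) (F G : {set {set T}}) (c : {set T} -> 'I_k).

Definition Bcc X Y : {set {set T}} := [set Z : {set T} | (X \subset Z) && (Z \subset Y)].
Definition Boo X Y : {set {set T}} := [set Z : {set T} | (X \proper Z) && (Z \proper Y)].
Definition Boc X Y : {set {set T}} := [set Z : {set T} | (X \proper Z) && (Z \subset Y)].
Definition Bco X Y : {set {set T}} := [set Z : {set T} | (X \subset Z) && (Z \proper Y)].

Definition Bup X Y : {set {set T}} :=
  [set Z in Boc X setT | Z :&: (Y :\: X) != set0].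
Definition Bdown X Y : {set {set T}} :=
  [set Z in Bco set0 Y | ~~ ((Y :\: X) \subset Z)].

Definition exact_coloring c := forall i : 'I_k, exists A, c A = i.

Definition rainbow_B2 c (W1 W2 W3 W4 : {set T}) :=
  [/\ [/\ W1 \proper W2, W1 \proper W3, W2 \proper W4 & W3 \proper W4],
      ~~ (W2 \subset W3) && ~~ (W3 \subset W2) &
      uniq [:: c W1; c W2; c W3; c W4]].

Definition no_rainbow_B2 c := forall W1 W2 W3 W4, ~ rainbow_B2 c W1 W2 W3 W4.

Definition mono c F := forall A B, A \in F -> B \in F -> c A = c B.
Definition distinct_col c F G := forall A B, A \in F -> B \in G -> c A <> c B.

Definition mono_distinct4 c F1 F2 F3 F4 :=
  [/\ mono c F1, mono c F2, mono c F3, mono c F4 &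
   [/\ distinct_col c F1 F2, distinct_col c F1 F3, distinct_col c F1 F4,
       distinct_col c F2 F3 & distinct_col c F2 F4 /\ distinct_col c F3 F4]].

Definition has_color_of c Z F := exists2 A, A \in F & c Z = c A.

Definition type23_params X0 Y0 :=
  [/\ set0 \proper X0, X0 \proper Y0, Y0 \proper setT & #|X0| + 2 <= #|Y0|].

Definition Type2 c := exists X0 Y0, type23_params X0 Y0 /\
  let F1 := Bcc set0 Y0 :\: Bcc X0 Y0 in
  let F4 := Bcc X0 setT :\: Bcc X0 Y0 in
  mono_distinct4 c F1 [set X0; Y0] (Boo X0 Y0) F4 /\
  forall Z, Z \notin Bcc set0 Y0 :|: Bcc X0 setT ->
    has_color_of c Z F1 \/ has_color_of c Z F4.

Definition Type3_1 c := exists X0 Y0, type23_params X0 Y0 /\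
  let F1 := Bcc set0 Y0 :\: Bcc X0 Y0 in
  let F2 := X0 |: (Bup X0 Y0 :\: Boc X0 Y0) in
  mono_distinct4 c F1 F2 (Boo X0 Y0) [set Y0] /\
  forall Z, Z \notin Bcc set0 Y0 :|: Bup X0 Y0 ->
    has_color_of c Z F1 \/ has_color_of c Z F2.

Definition Type3_2 c := exists X0 Y0, type23_params X0 Y0 /\
  let F1 := Bcc X0 setT :\: Bcc X0 Y0 in
  let F2 := Y0 |: (Bdown X0 Y0 :\: Bco X0 Y0) in
  mono_distinct4 c F1 F2 (Boo X0 Y0) [set X0] /\
  forall Z, Z \notin Bcc X0 setT :|: Bdown X0 Y0 ->
    has_color_of c Z F1 \/ has_color_of c Z F2.

Definition Type4_1 c := exists X0 (Y0 : {set {set T}}),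
  [/\ 1 <= #|X0|, #|X0| <= #|T| - 2, Y0 != set0 & Y0 \subset Boc X0 setT] /\
  let F1 := \bigcup_(Y in Y0) (Bco set0 Y :\: Bco X0 Y) in
  let F3 := Boc X0 setT :\: Y0 in
  mono_distinct4 c F1 [set X0] F3 Y0 /\
  forall Z, Z \notin Bcc X0 setT :|: \bigcup_(Y in Y0) Bco set0 Y ->
    has_color_of c Z F1 \/ has_color_of c Z F3.

Definition Type4_2 c := exists Y0 (X0 : {set {set T}}),
  [/\ 2 <= #|Y0|, #|Y0| <= #|T| - 1, X0 != set0 & X0 \subset Boo set0 Y0] /\
  let F1 := \bigcup_(X in X0) (Boc X setT :\: Boc X Y0) in
  let F3 := Bco set0 Y0 :\: X0 in
  mono_distinct4 c F1 [set Y0] F3 X0 /\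
  forall Z, Z \notin Bcc set0 Y0 :|: \bigcup_(X in X0) Boc X setT ->
    has_color_of c Z F1 \/ has_color_of c Z F3.

End Defs.

(* Main.v *)
Require Import Defs.
From mathcomp Require Import all_boot zify.
From Stdlib Require Import Classical.
Set Implicit Arguments. Unset Strict Implicit. Unset Printing Implicit Defensive.

Section Basic.
Variable T : finType.
Implicit Types A B X Y Z : {set T}.

Definition incomp A B := ~~ (A \subset B) && ~~ (B \subset A).

Lemma nsubW A B x : x \in A -> x \notin B -> ~~ (A \subset B).
Proof. by move=> xA xB; apply/negP => /subsetP /(_ x xA); rewrite (negbTE xB). Qed.

Lemma incompW A B x y : x \in A -> x \notin B -> y \in B -> y \notin A -> incomp A B.
Proof. by move=> xA xB yB yA; rewrite /incomp (nsubW xA xB) (nsubW yB yA). Qed.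

Lemma incompC A B : incomp A B = incomp B A.
Proof. by rewrite /incomp andbC. Qed.

Lemma properW A B x : A \subset B -> x \in B -> x \notin A -> A \proper B.
Proof. by move=> sAB xB xA; rewrite properE sAB (nsubW xB xA). Qed.

Lemma properWx A B : A \proper B -> exists2 x, x \in B & x \notin A.
Proof. by case/properP. Qed.

Lemma nsubWx A B : ~~ (A \subset B) -> exists2 x, x \in A & x \notin B.
Proof. by move/subsetPn. Qed.

Lemma pS A B : A \proper B -> A \subset B.
Proof. by case/andP. Qed.

Lemma proper_neq A B : A \proper B -> A != B.
Proof. by rewrite properEneq => /andP[]. Qed.

Lemma sub_ne_proper A B : A \subset B -> A != B -> A \proper B.
Proof. by move=> s ne; rewrite properEneq ne s. Qed.

Lemma comp_cases A B : A \subset B \/ B \subset A \/ incomp A B.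
Proof.
case: (boolP (A \subset B)) => sAB; first by left.
case: (boolP (B \subset A)) => sBA; first by right; left.
by right; right; rewrite /incomp sAB sBA.
Qed.

End Basic.

Ltac sb := apply/subsetP => ?; rewrite !inE.

Ltac neqs := match goal with |- is_true (?x != ?y) => first [assumption | rewrite eq_sym; assumption] end.
Ltac ucol := rewrite /= ?inE ?negb_or /=; repeat (apply/andP; split); try neqs; try done.

Section Fill.
Variable T : finType.
Implicit Types A B X Y Z U V W m M d : {set T}.

Lemma subW A B x : A \subset B -> x \in A -> x \in B.
Proof. by move=> /subsetP h /h. Qed.

Lemma subWn A B x : A \subset B -> x \notin B -> x \notin A.
Proof. by move=> /subsetP h; apply: contra => /h. Qed.

Lemma in1U x A : x \in x |: A.
Proof. by rewrite !inE eqxx. Qed.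

Lemma inU1 x y A : y \in A -> y \in x |: A.
Proof. by move=> h; rewrite !inE h orbT. Qed.

Lemma notin1U x y A : y != x -> y \notin A -> y \notin x |: A.
Proof. by move=> h1 h2; rewrite !inE negb_or h1 h2. Qed.

Lemma sub1U x A : A \subset x |: A.
Proof. by apply/subsetP => z; apply: inU1. Qed.

Lemma sub1U2 x A B : x \in B -> A \subset B -> x |: A \subset B.
Proof. by move=> xB AB; apply/subsetP => z; rewrite !inE => /orP[/eqP->//|]; apply: subW. Qed.

Lemma proper1U x A : x \notin A -> A \proper x |: A.
Proof. by move=> h; apply: (properW (sub1U x A) (in1U x A) h). Qed.

Lemma between_incomp m M (Z1 Z2 : {set T}) x : m \proper Z1 -> Z1 \subset Z2 -> Z2 \subset M ->
  x \in M -> x \notin Z2 ->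
  [/\ m \proper x |: m, x |: m \proper M, incomp (x |: m) Z1 & incomp (x |: m) Z2].
Proof.
move=> mZ1 Z12 Z2M xM xZ2.
have [y yZ1 ym] := properWx mZ1.
have xZ1 : x \notin Z1 by apply: subWn Z12 xZ2.
have xm : x \notin m by apply: subWn (subset_trans (pS mZ1) Z12) xZ2.
have yx : y != x by apply: contraNneq xZ1 => <-.
have yX : y \notin x |: m by apply: notin1U.
have yZ2 : y \in Z2 by apply: subW Z12 yZ1.
split.
- exact: proper1U.
- apply: (properW _ (subW Z2M yZ2) yX); apply: sub1U2 => //.
  exact: subset_trans (pS mZ1) (subset_trans Z12 Z2M).
- exact: (incompW (in1U x m) xZ1 yZ1 yX).
- exact: (incompW (in1U x m) xZ2 yZ2 yX).
Qed.

Lemma fill (P : {set T} -> Prop) m M d : m \proper d -> d \proper M -> P d ->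
  (forall Z W, m \proper Z -> Z \proper M -> m \proper W -> W \proper M -> P W -> incomp Z W -> P Z) ->
  forall Z, m \proper Z -> Z \proper M -> P Z.
Proof.
move=> md dM Pd S Z mZ ZM.
case: (comp_cases Z d) => [h|[h|h]]; last by apply: (S Z d).
- case: (eqVneq Z d) => [->//|ne].
  have [x xM xd] := properWx dM.
  have [h1 h2 h3 h4] := between_incomp mZ h (pS dM) xM xd.
  apply: (S Z (x |: m)) => //; last by rewrite incompC.
  by apply: (S _ d) => //.
- case: (eqVneq Z d) => [->//|ne].
  have [x xM xd] := properWx ZM.
  have [h1 h2 h3 h4] := between_incomp md h (pS ZM) xM xd.
  apply: (S Z (x |: m)) => //; last by rewrite incompC.
  by apply: (S _ d) => //.
Qed.

End Fill.

Definition Type4_1s (T : finType) (c : {set T} -> 'I_4) := exists (X0 : {set T}) (Y0 : {set {set T}}),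
  setT \notin Y0 /\
  ([/\ 1 <= #|X0|, #|X0| <= #|T| - 2, Y0 != set0 & Y0 \subset Boc X0 setT] /\
  let F1 := \bigcup_(Y in Y0) (Bco set0 Y :\: Bco X0 Y) in
  let F3 := Boc X0 setT :\: Y0 in
  mono_distinct4 c F1 [set X0] F3 Y0 /\
  forall Z, Z \notin Bcc X0 setT :|: \bigcup_(Y in Y0) Bco set0 Y ->
    has_color_of c Z F1 \/ has_color_of c Z F3).

Lemma T41s_T41 (T : finType) (c : {set T} -> 'I_4) : Type4_1s c -> Type4_1 c.
Proof. by case=> X0 [Y0 [_ H]]; exists X0, Y0. Qed.

Lemma mono_of (T : finType) (c : {set T} -> 'I_4) (F : {set {set T}}) k :
  (forall Z, Z \in F -> c Z = k) -> mono c F.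
Proof. by move=> h A B /h -> /h ->. Qed.

Lemma dist_of (T : finType) (c : {set T} -> 'I_4) (F G : {set {set T}}) k1 k2 :
  (forall Z, Z \in F -> c Z = k1) -> (forall Z, Z \in G -> c Z = k2) ->
  k1 != k2 -> distinct_col c F G.
Proof. by move=> h1 h2 ne A B /h1 -> /h2 ->; apply/eqP. Qed.

Lemma hc_of (T : finType) (c : {set T} -> 'I_4) Z (F : {set {set T}}) A :
  A \in F -> c Z = c A -> has_color_of c Z F.
Proof. by move=> h e; exists A. Qed.

Lemma md4_of (T : finType) (c : {set T} -> 'I_4) (F1 F2 F3 F4 : {set {set T}}) k1 k2 k3 k4 :
  (forall Z, Z \in F1 -> c Z = k1) -> (forall Z, Z \in F2 -> c Z = k2) ->
  (forall Z, Z \in F3 -> c Z = k3) -> (forall Z, Z \in F4 -> c Z = k4) ->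
  uniq [:: k1; k2; k3; k4] -> mono_distinct4 c F1 F2 F3 F4.
Proof.
move=> h1 h2 h3 h4; rewrite /= !inE !negb_or => /and4P[/and3P[a b d] /andP[e f] g _].
split; try by apply: mono_of; eassumption.
split; try by apply: dist_of; eassumption.
by split; apply: dist_of; eassumption.
Qed.

Section Col.
#[local] Set Default Proof Using "All".
Variable T : finType.
Implicit Types A B X Y Z U V W m M d : {set T}.
Variable c : {set T} -> 'I_4.
Hypothesis NR : no_rainbow_B2 c.
Variables al be ga de : 'I_4.
Hypotheses (Hal : c set0 = al) (Hbe : c setT = be).
Hypotheses (Hab : al != be) (Hag : al != ga) (Had : al != de) (Hbg : be != ga) (Hbd : be != de) (Hgd : ga != de).

Lemma col4 x : [\/ x = al, x = be, x = ga | x = de].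
Proof.
have U : uniq [:: al; be; ga; de] by ucol.
have : x \in [:: al; be; ga; de].
  apply/negPn/negP => xn.
  have U5 : uniq [:: x; al; be; ga; de] by rewrite cons_uniq xn U.
  have := max_card (mem [:: x; al; be; ga; de]).
  by rewrite (card_uniqP U5) card_ord.
rewrite !inE; case/orP => [/eqP->|]; first by constructor 1.
case/orP => [/eqP->|]; first by constructor 2.
case/orP => [/eqP->|/eqP->]; first by constructor 3.
by constructor 4.
Qed.

Lemma RB W1 W2 W3 W4 : W1 \proper W2 -> W1 \proper W3 -> W2 \proper W4 -> W3 \proper W4 ->
  incomp W2 W3 -> uniq [:: c W1; c W2; c W3; c W4] -> False.
Proof. by move=> *; apply: (NR (W1:=W1) (W2:=W2) (W3:=W3) (W4:=W4)); split. Qed.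

Lemma ne0 A : c A <> al -> set0 \proper A.
Proof. by move=> h; rewrite proper0; apply/eqP => E; apply: h; rewrite E. Qed.

Lemma neT A : c A <> be -> A \proper setT.
Proof. by move=> h; rewrite properT; apply/eqP => E; apply: h; rewrite E. Qed.

Lemma neqc A B : c A <> c B -> A != B.
Proof. by move=> h; apply/eqP => E; apply: h; rewrite E. Qed.

Lemma cross A B : c A = ga -> c B = de -> incomp A B -> False.
Proof.
move=> cA cB iAB.
apply: (RB (W1:=set0) (W4:=setT)) iAB _.
- by apply: ne0; rewrite cA; apply/eqP; rewrite eq_sym.
- by apply: ne0; rewrite cB; apply/eqP; rewrite eq_sym.
- by apply: neT; rewrite cA; apply/eqP; rewrite eq_sym.
- by apply: neT; rewrite cB; apply/eqP; rewrite eq_sym.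
- by rewrite Hal Hbe cA cB; ucol.
Qed.


Ltac setc := repeat match goal with H : c ?A = _ |- context [c ?A] => rewrite H end.
Ltac cne := match goal with |- c ?A <> _ => setc; apply/eqP; neqs end.
Ltac rbc := setc; ucol.

Lemma K0 A A' B B' : c A = ga -> c A' = ga -> c B = de -> c B' = de ->
  A \proper B -> A \proper B' -> A' \proper B -> A' \proper B' ->
  ~~ (A' \subset A) -> ~~ (B \subset B') -> False.
Proof.
move=> cA cA' cB cB' AB AB' A'B A'B' /nsubWx[p pA' pA] /nsubWx[q qB qB'].
have qA' : q \notin A' by apply: contra qB' => h; exact: (subsetP (pS A'B') q h).
have qA : q \notin A by apply: contra qB' => h; exact: (subsetP (pS AB') q h).
have pB' : p \in B' by apply: (subsetP (pS A'B')).
have pB : p \in B by apply: (subsetP (pS A'B)).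
have pq : p != q by apply: contraNneq qB' => <-.
set V := q |: A.
have pV : p \notin V by rewrite !inE (negbTE pq) (negbTE pA).
have qV : q \in V by rewrite !inE eqxx.
have iVA' : incomp V A' by apply: (incompW qV qA' pA' pV).
have iVB' : incomp V B' by apply: (incompW qV qB' pB' pV).
have AV : A \proper V by apply: (properW _ qV qA); apply/subsetP => z zA; rewrite !inE zA orbT.
have VB : V \proper B.
  apply: (properW _ pB pV); apply/subsetP => z; rewrite !inE => /orP[/eqP->//|zA].
  exact: (subsetP (pS AB)).
case: (col4 (c V)) => cV.
- apply: (RB (W1:=A) (W2:=V) (W3:=B') (W4:=setT)) => //; try (apply: neT; cne). rbc.
- apply: (RB (W1:=set0) (W2:=A') (W3:=V) (W4:=B)) => //; try (apply: ne0; cne).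
  by rewrite incompC. rbc.
- by apply: (cross cV cB').
- by apply: (cross cA' cV); rewrite incompC.
Qed.

Lemma neq_nsub A B : A != B -> ~~ (A \subset B) \/ ~~ (B \subset A).
Proof.
move=> ne; case: (boolP (A \subset B)) => h1; last by left.
case: (boolP (B \subset A)) => h2; last by right.
by move: ne; rewrite eqEsubset h1 h2.
Qed.

Lemma K A A' B B' : c A = ga -> c A' = ga -> c B = de -> c B' = de ->
  A \proper B -> A \proper B' -> A' \proper B -> A' \proper B' ->
  A != A' -> B != B' -> False.
Proof.
move=> cA cA' cB cB' AB AB' A'B A'B' /neq_nsub hA /neq_nsub hB.
case: hA => hA; case: hB => hB.
- by apply: (K0 cA' cA cB cB' A'B A'B' AB AB' hA hB).
- by apply: (K0 cA' cA cB' cB A'B' A'B AB' AB hA hB).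
- by apply: (K0 cA cA' cB cB' AB AB' A'B A'B' hA hB).
- by apply: (K0 cA cA' cB' cB AB' AB A'B' A'B hA hB).
Qed.

Lemma AC m B A M : c m = ga -> c B = de -> c A = ga -> c M = de ->
  m \proper B -> B \proper A -> A \proper M -> False.
Proof.
move=> cm cB cA cM mB BA AM.
have [x xA xB] := properWx BA.
have [y yM yA] := properWx AM.
have [z zB zm] := properWx mB.
have xm : x \notin m by apply: contra xB => h; exact: (subsetP (pS mB) x h).
have zA : z \in A by exact: (subsetP (pS BA) z zB).
have xM : x \in M by exact: (subsetP (pS AM) x xA).
have zx : z != x by apply: contraNneq xB => <-.
have xy : x != y by apply: contraNneq yA => <-.
have yB : y \notin B by apply: contra yA => h; exact: (subsetP (pS BA) y h).
set U1 := x |: m. set U2 := y |: B.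
have xU1 : x \in U1 by rewrite !inE eqxx.
have zU1 : z \notin U1 by rewrite !inE (negbTE zx) (negbTE zm).
have yU1 : y \notin U1 by rewrite !inE eq_sym (negbTE xy) /=; apply: contra yB => h; exact: (subsetP (pS mB) y h).
have xU2 : x \notin U2 by rewrite !inE (negbTE xy) (negbTE xB).
have zU2 : z \in U2 by rewrite !inE zB orbT.
have yU2 : y \in U2 by rewrite !inE eqxx.
have iU1B : incomp U1 B by apply: (incompW xU1 xB zB zU1).
have mU1 : m \proper U1 by apply: (properW _ xU1 xm); apply/subsetP => w wm; rewrite !inE wm orbT.
have U1A : U1 \proper A.
  apply: (properW _ zA zU1); apply/subsetP => w; rewrite !inE => /orP[/eqP->//|wm].
  exact: (subsetP (pS (proper_trans mB BA)) w wm).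
have iU2A : incomp U2 A by apply: (incompW yU2 yA xA xU2).
have BU2 : B \proper U2 by apply: (properW _ yU2 yB); apply/subsetP => w wm; rewrite !inE wm orbT.
have U2M : U2 \proper M.
  apply: (properW _ xM xU2); apply/subsetP => w; rewrite !inE => /orP[/eqP->//|wB].
  exact: (subsetP (pS (proper_trans BA AM)) w wB).
have iU12 : incomp U1 U2 by apply: (incompW xU1 xU2 zU2 zU1).
have U1T : U1 \proper setT by apply: (properW (subsetT _) (in_setT y) yU1).
have U2T : U2 \proper setT by apply: (properW (subsetT _) (in_setT x) xU2).
have AT : A \proper setT by apply: (proper_trans AM); apply: neT; cne.
have BT : B \proper setT by apply: (proper_trans BA).
have cU1 : c U1 = de.
  case: (col4 (c U1)) => cU //; exfalso.
  - by apply: (RB (W1:=m) (W2:=B) (W3:=U1) (W4:=setT)) => //; [rewrite incompC | rbc].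
  - apply: (RB (W1:=set0) (W2:=B) (W3:=U1) (W4:=A)) => //; try (apply: ne0; cne).
    by rewrite incompC. rbc.
  - by case: (cross cU cB).
have cU2 : c U2 = ga.
  case: (col4 (c U2)) => cU //; exfalso.
  - by apply: (RB (W1:=B) (W2:=A) (W3:=U2) (W4:=setT)) => //; [rewrite incompC | rbc].
  - apply: (RB (W1:=set0) (W2:=A) (W3:=U2) (W4:=M)) => //; try (apply: ne0; cne).
    by rewrite incompC. rbc.
  - by case: (cross cA cU); rewrite incompC.
by apply: (cross cU2 cU1); rewrite incompC.
Qed.

Definition inP Z := c Z = ga \/ c Z = de.

Lemma ACK m M A A' B B' : c m = ga -> c M = de ->
  (forall Z, inP Z -> #|m| <= #|Z|) -> (forall Z, inP Z -> #|Z| <= #|M|) ->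
  c A = ga -> c A' = ga -> c B = de -> c B' = de -> A != A' -> B != B' -> False.
Proof.
move=> cm cM minm maxM cA cA' cB cB' nA nB.
have Dab : forall d, c d = de -> m \proper d.
  move=> d cd; case: (comp_cases m d) => [h|[h|h]].
  - by apply: sub_ne_proper h _; apply: neqc; rewrite cm cd; apply/eqP.
  - have : d \proper m by apply: sub_ne_proper h _; apply: neqc; rewrite cm cd; apply/eqP; neqs.
    by move/proper_card; rewrite ltnNge minm //; right.
  - by case: (cross cm cd h).
have Gbe : forall g, c g = ga -> g \proper M.
  move=> g cg; case: (comp_cases g M) => [h|[h|h]].
  - by apply: sub_ne_proper h _; apply: neqc; rewrite cg cM; apply/eqP.
  - have : M \proper g by apply: sub_ne_proper h _; apply: neqc; rewrite cg cM; apply/eqP; neqs.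
    by move/proper_card; rewrite ltnNge maxM //; left.
  - by case: (cross cg cM h).
have GD : forall g d, c g = ga -> c d = de -> g \proper d.
  move=> g d cg cd; case: (comp_cases g d) => [h|[h|h]].
  - by apply: sub_ne_proper h _; apply: neqc; rewrite cg cd; apply/eqP.
  - have dg : d \proper g by apply: sub_ne_proper h _; apply: neqc; rewrite cg cd; apply/eqP; neqs.
    by case: (AC cm cd cg cM (Dab d cd) dg (Gbe g cg)).
  - by case: (cross cg cd h).
by apply: (K cA cA' cB cB' (GD _ _ cA cB) (GD _ _ cA cB') (GD _ _ cA' cB) (GD _ _ cA' cB') nA nB).
Qed.

Lemma T2_low m M x y : c m = ga -> c M = ga -> m \proper M ->
  (forall Z, c Z = ga -> Z = m \/ Z = M) ->
  (forall Z, m \proper Z -> Z \proper M -> c Z = de) ->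
  (forall Z, c Z = de -> m \proper Z /\ Z \proper M) ->
  x != y -> x \in M -> x \notin m -> y \in M -> y \notin m ->
  forall Z, Z \subset M -> ~~ (m \subset Z) -> c Z = al.
Proof.
move=> cm cM mM Gc Iv Dc xy xM xm yM ym.
have cnot : forall Z, Z \subset M -> ~~ (m \subset Z) -> c Z <> ga /\ c Z <> de.
  move=> Z ZM mZ; split => cZ.
  - case: (Gc Z cZ) => E; move: mZ; rewrite E ?subxx //.
    by rewrite (pS mM).
  - by case: (Dc Z cZ) => /pS h _; rewrite h in mZ.
have atom : forall z, exists2 w, w \in M & (w \notin m) && (w != z).
  move=> z; case: (eqVneq x z) => [<-|ne]; last by exists x => //; rewrite xm.
  by exists y => //; rewrite ym eq_sym.
have inter : forall z, z \in M -> z \notin m -> (forall w, w \in M -> w \notin m -> w != z ->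
    [/\ m \proper z |: m, z |: m \proper M & c (z |: m) = de]).
  move=> z zM zm w wM wm wz.
  have h1 : m \proper z |: m by apply: proper1U.
  have h2 : z |: m \proper M.
    by apply: (properW _ wM (notin1U wz wm)); apply: sub1U2 => //; apply: pS.
  by split => //; apply: Iv.
have claim1 : forall Z, Z \subset M -> ~~ (m \subset Z) -> ~~ (Z \subset m) -> c Z = al.
  move=> Z ZM mZ Zm.
  have [w wZ wm] := nsubWx Zm.
  have [u um uZ] := nsubWx mZ.
  have wM : w \in M by apply: subW ZM wZ.
  have [v vM /andP[vm vw]] := atom w.
  have [h1 h2 h3] := inter v vM vm w wM wm ltac:(by rewrite eq_sym).
  have iZ : incomp Z (v |: m).
    by apply: (incompW wZ (notin1U _ wm) (inU1 v um) uZ); rewrite eq_sym.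
  have [c1 c2] := cnot Z ZM mZ.
  case: (col4 (c Z)) => cZ //; exfalso.
  have ZM' : Z \proper M.
    apply: sub_ne_proper ZM _; apply/eqP => E; move: mZ; by rewrite E (pS mM).
  by apply: (RB (W1:=set0) (W2:=Z) (W3:=v |: m) (W4:=M)) => //; try (apply: ne0; cne); rbc.
move=> Z ZM mZ.
case: (boolP (Z \subset m)) => Zm; last by apply: claim1.
have [c1 c2] := cnot Z ZM mZ.
case: (col4 (c Z)) => cZ //; exfalso.
have [u um uZ] := nsubWx mZ.
have xZ : x \notin Z by apply: subWn Zm xm.
have ux : u != x by apply: contraNneq xm => <-.
have uX : u \notin x |: Z by apply: notin1U.
have cX : c (x |: Z) = al.
  apply: claim1.
  - by apply: sub1U2.
  - exact: (nsubW um uX).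
  - exact: (nsubW (in1U x Z) xm).
have [v vM /andP[vm vx]] := atom x.
have [h1 h2 h3] := inter x xM xm v vM vm vx.
apply: (RB (W1:=Z) (W2:=x |: Z) (W3:=m) (W4:=x |: m)) => //; last by rbc.
- exact: proper1U.
- exact: (properW Zm um uZ).
- apply: (properW _ (inU1 x um) uX); apply: sub1U2; first exact: in1U.
  exact: subset_trans Zm (sub1U x m).
- exact: (incompW (in1U x Z) xm um uX).
Qed.

Lemma L_F1 s Y : c s = ga -> (forall Z, c Z = ga -> Z = s) -> (forall Z, c Z = de -> s \proper Z) ->
  c Y = de -> s \proper Y -> forall Z, Z \proper Y -> ~~ (s \subset Z) -> c Z = al.
Proof.
move=> cs Gs Dab cY sY.
have cnot : forall Z, ~~ (s \subset Z) -> c Z <> ga /\ c Z <> de.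
  move=> Z sZ; split => cZ.
  - by move: sZ; rewrite (Gs Z cZ) subxx.
  - by move: sZ; rewrite (pS (Dab Z cZ)).
have s0 : set0 \proper s by apply: ne0; cne.
have claim1 : forall Z, Z \proper Y -> ~~ (s \subset Z) -> ~~ (Z \subset s) -> c Z = al.
  move=> Z ZY sZ Zs; have [c1 c2] := cnot Z sZ.
  case: (col4 (c Z)) => cZ //; exfalso.
  by apply: (RB (W1:=set0) (W2:=s) (W3:=Z) (W4:=Y)) => //; try (apply: ne0; cne);
    [rewrite /incomp sZ Zs | rbc].
move=> Z ZY sZ.
case: (boolP (Z \subset s)) => Zs; last by apply: claim1.
have [c1 c2] := cnot Z sZ.
case: (col4 (c Z)) => cZ //; exfalso.
have [x xY xs] := properWx sY.
have [u us uZ] := nsubWx sZ.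
have xZ : x \notin Z by apply: subWn Zs xs.
have ux : u != x by apply: contraNneq xs => <-.
have uX : u \notin x |: Z by apply: notin1U.
have uY : u \in Y by apply: subW (pS sY) us.
have XY : x |: Z \proper Y.
  apply: (properW _ uY uX); apply: sub1U2 => //; exact: subset_trans Zs (pS sY).
have cX : c (x |: Z) = al.
  apply: claim1 => //; [exact: (nsubW us uX) | exact: (nsubW (in1U x Z) xs)].
apply: (RB (W1:=Z) (W2:=s) (W3:=x |: Z) (W4:=Y)) => //.
- exact: (properW Zs us uZ).
- exact: proper1U.
- exact: (incompW us uX (in1U x Z) xs).
- rbc.
Qed.

Lemma C1 s U V : c s = ga -> c U = al -> c V = de -> s \proper U -> s \proper V ->
  U \subset V \/ V \subset U.
Proof.
move=> cs cU cV sU sV; case: (comp_cases U V) => [h|[h|h]]; [by left|by right|exfalso].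
apply: (RB (W1:=s) (W2:=U) (W3:=V) (W4:=setT)) => //; try (apply: neT; cne); rbc.
Qed.

Lemma L_Y s Y d : c s = ga -> (forall Z, c Z = ga -> Z = s) -> c Y = al -> c d = de ->
  s \proper Y -> Y \proper d -> forall Z, s \proper Z -> Z \proper d -> c Z = al.
Proof.
move=> cs Gs cY cd sY Yd.
have dT : d \proper setT by apply: neT; cne.
apply: (fill (P := fun Z => c Z = al) sY Yd cY).
move=> Z W sZ Zd sW Wd cW iZW.
case: (col4 (c Z)) => cZ //; exfalso.
- apply: (RB (W1:=s) (W2:=Z) (W3:=W) (W4:=d)) => //; rbc.
- by move: sZ; rewrite (Gs Z cZ) properxx.
- apply: (RB (W1:=s) (W2:=W) (W3:=Z) (W4:=setT)) => //.
  + exact: proper_trans Wd dT.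
  + exact: proper_trans Zd dT.
  + by rewrite incompC.
  + rbc.
Qed.

Lemma L_Yd s Y d : c s = ga -> (forall Z, c Z = ga -> Z = s) -> (forall Z, c Z = de -> s \proper Z) ->
  c Y = al -> c d = de -> s \proper Y -> Y \proper d ->
  (forall d', c d' = de -> d' = d) /\ (forall Z, Z \proper d -> c Z <> be).
Proof.
move=> cs Gs Dab cY cd sY Yd.
have LY := L_Y cs Gs cY cd sY Yd.
have [a aY as_] := properWx sY.
have [b bd bY] := properWx Yd.
have ad : a \in d by apply: subW (pS Yd) aY.
have bs : b \notin s by apply: subWn (pS sY) bY.
have ab : a != b by apply: contraNneq bY => <-.
have atom : forall z, z \in d -> z \notin s -> z |: s \proper d /\ c (z |: s) = al.
  move=> z zd zs.
  have h : z |: s \proper d.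
    case: (eqVneq z a) => [->|za].
      apply: (properW _ bd (notin1U _ bs)); last by rewrite eq_sym.
      by apply: sub1U2 => //; exact: pS (proper_trans sY Yd).
    apply: (properW _ ad (notin1U _ as_)); last by rewrite eq_sym.
    by apply: sub1U2 => //; exact: pS (proper_trans sY Yd).
  by split => //; apply: LY => //; apply: proper1U.
split.
- move=> d' cd'; apply/eqP/negPn/negP => ne.
  have sd' := Dab d' cd'.
  case: (boolP (d' \subset d)) => h.
    have := LY d' sd' (sub_ne_proper h ne); by rewrite cd'; apply/eqP; neqs.
  have dd' : d \subset d'.
    apply/subsetP => z zd; case: (boolP (z \in s)) => zs; first exact: subW (pS sd') zs.
    have [h1 h2] := atom z zd zs.
    case: (C1 cs h2 cd' (proper1U zs) sd') => h3; first exact: subW h3 (in1U z s).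
    by move: h; rewrite (subset_trans h3 (pS h1)).
  have dd'p : d \proper d' by apply: sub_ne_proper dd' _; rewrite eq_sym.
  have := L_Y cs Gs cY cd' sY (proper_trans Yd dd'p) (proper_trans sY Yd) dd'p.
  by rewrite cd; apply/eqP; neqs.
- move=> Z Zd cZ.
  case: (boolP (s \subset Z)) => sZ.
    case: (eqVneq s Z) => [E|ne]; first by move: cZ; rewrite -E cs; apply/eqP; neqs.
    by move: (LY Z (sub_ne_proper sZ ne) Zd); rewrite cZ; apply/eqP; neqs.
  by move: (L_F1 cs Gs Dab cd (proper_trans sY Yd) Zd sZ); rewrite cZ; apply/eqP; neqs.
Qed.

Lemma CA0 s B B' : c s = ga -> (forall Z, c Z = ga -> Z = s) -> c B = de -> c B' = de ->
  B \proper s -> s \proper B' -> False.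
Proof.
move=> cs Gs cB cB' Bs sB'.
have [x xB' xs] := properWx sB'.
have [z zs zB] := properWx Bs.
have xB : x \notin B by apply: subWn (pS Bs) xs.
have zx : z != x by apply: contraNneq xs => <-.
have zU : z \notin x |: B by apply: notin1U.
have iU : incomp (x |: B) s by apply: (incompW (in1U x B) xs zs zU).
have BU : B \proper x |: B by apply: proper1U.
have UB' : x |: B \proper B'.
  apply: (properW _ (subW (pS sB') zs) zU); apply: sub1U2 => //.
  exact: pS (proper_trans Bs sB').
have B'T : B' \proper setT by apply: neT; cne.
case: (col4 (c (x |: B))) => cU.
- apply: (RB (W1:=B) (W2:=s) (W3:=x |: B) (W4:=setT)) => //; try by rewrite incompC.
  + exact: proper_trans sB' B'T.
  + exact: proper_trans UB' B'T.
  + rbc.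
- apply: (RB (W1:=set0) (W2:=s) (W3:=x |: B) (W4:=B')) => //; try (apply: ne0; cne); try by rewrite incompC.
  rbc.
- by move: iU; rewrite (Gs _ cU) /incomp subxx.
- by apply: (cross cs cU); rewrite incompC.
Qed.

Lemma B41 s d : c s = ga -> (forall Z, c Z = ga -> Z = s) -> (forall Z, c Z = de -> s \proper Z) ->
  c d = de -> (forall Z, s \proper Z -> c Z <> al) -> Type4_1s c.
Proof.
move=> cs Gs Dab cd noal.
have sd := Dab d cd.
have dT : d \proper setT by apply: neT; cne.
have s0 : set0 \proper s by apply: ne0; cne.
have s0' : ~~ (s \subset set0) by rewrite subset0 -proper0.
set Y0 := [set Z | c Z == de].
have inY0 : forall Z, (Z \in Y0) = (c Z == de) by move=> Z; rewrite inE.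
have TY : setT \notin Y0 by rewrite inY0 Hbe; neqs.
exists s, Y0; split => //; split.
  split.
  - by rewrite card_gt0 -proper0.
  - have := proper_card sd; have := proper_card dT; rewrite cardsT; lia.
  - by apply/set0Pn; exists d; rewrite inY0 cd.
  - by apply/subsetP => Z; rewrite inY0 !inE subsetT andbT => /eqP /Dab.
cbv zeta; split.
  apply: (md4_of (k1 := al) (k2 := ga) (k3 := be) (k4 := de)).
  - move=> Z /bigcupP[Y]; rewrite inY0 => /eqP cY; rewrite !inE sub0set /= => /andP[h ZY].
    apply: (L_F1 cs Gs Dab cY (Dab Y cY) ZY); by move: h; rewrite ZY andbT.
  - by move=> Z; rewrite inE => /eqP->.
  - move=> Z; rewrite !inE subsetT andbT => /andP[cZ sZ].
    case: (col4 (c Z)) => cZ' //; exfalso.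
    + exact: (noal Z sZ cZ').
    + by move: sZ; rewrite (Gs Z cZ') properxx.
    + by rewrite cZ' eqxx in cZ.
  - by move=> Z; rewrite inY0 => /eqP.
  - ucol.
move=> Z; rewrite !inE negb_or subsetT andbT => /andP[sZ _].
case: (col4 (c Z)) => cZ.
- left; apply: (hc_of (A := set0)); last by rewrite cZ Hal.
  apply/bigcupP; exists d; first by rewrite inY0 cd.
  by rewrite !inE sub0set (negbTE s0') (proper_trans s0 sd).
- right; apply: (hc_of (A := setT)); last by rewrite cZ Hbe.
  by rewrite !inE Hbe (proper_trans sd dT) subxx !andbT; neqs.
- by move: sZ; rewrite (Gs Z cZ) subxx.
- by move: sZ; rewrite (pS (Dab Z cZ)).
Qed.

Lemma B32 s Y d : c s = ga -> (forall Z, c Z = ga -> Z = s) -> (forall Z, c Z = de -> s \proper Z) ->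
  c Y = al -> s \proper Y -> c d = de ->
  (forall Y' d', c Y' = al -> s \proper Y' -> c d' = de -> d' \proper Y') -> Type3_2 c.
Proof.
move=> cs Gs Dab cY sY cd AllD.
have dY := AllD Y d cY sY cd.
have sd := Dab d cd.
have YT : Y \proper setT by apply: neT; cne.
have s0 : set0 \proper s by apply: ne0; cne.
have Iv : forall Z, s \proper Z -> Z \proper Y -> c Z = de.
  apply: (fill (P := fun Z => c Z = de) sd dY cd).
  move=> Z W sZ ZY sW WY cW iZW.
  case: (col4 (c Z)) => cZ //; exfalso.
  - apply: (RB (W1:=s) (W2:=Z) (W3:=W) (W4:=setT)) => //.
    + exact: proper_trans ZY YT.
    + exact: proper_trans WY YT.
    + rbc.
  - by apply: (RB (W1:=s) (W2:=Z) (W3:=W) (W4:=Y)) => //; rbc.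
  - by move: sZ; rewrite (Gs Z cZ) properxx.
have [a ad as_] := properWx sd.
have [b bY bd] := properWx dY.
have aY : a \in Y by apply: subW (pS dY) ad.
have bs : b \notin s by apply: subWn (pS sd) bd.
have ab : a != b by apply: contraNneq bd => <-.
have DY : forall Z, c Z = de -> Z \proper Y by move=> Z cZ; apply: AllD.
have F1c : forall Z, s \subset Z -> ~~ (Z \subset Y) -> c Z = be.
  move=> Z sZ ZY.
  have sZp : s \proper Z.
    apply: sub_ne_proper sZ _; apply/eqP => E; by move: ZY; rewrite -E (pS sY).
  have [z zZ zY] := nsubWx ZY.
  have zs : z \notin s by apply: subWn (pS sY) zY.
  case: (col4 (c Z)) => cZ //; exfalso.
  - have dZ := AllD Z d cZ sZp cd.
    have zd : z \notin d by apply: subWn (pS dY) zY.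
    have az : a != z by apply: contraNneq zd => <-.
    have aV : a \notin z |: s by apply: notin1U.
    have VZ : z |: s \proper Z.
      apply: (properW _ (subW (pS dZ) ad) aV); exact: sub1U2.
    have cV : c (z |: s) = be.
      case: (col4 (c (z |: s))) => cV //; exfalso.
      + by move: aV; rewrite (subW (pS (AllD _ d cV (proper1U zs) cd)) ad).
      + by move: (Gs _ cV) => E; move: zs; rewrite -E in1U.
      + by move: zY; rewrite (subW (pS (DY _ cV)) (in1U z s)).
    apply: (RB (W1:=s) (W2:=z |: s) (W3:=d) (W4:=Z)) => //.
    + exact: proper1U.
    + exact: (incompW (in1U z s) zd ad aV).
    + rbc.
  - by move: sZp; rewrite (Gs Z cZ) properxx.
  - by move: ZY; rewrite (pS (DY Z cZ)).
have F2c : forall Z, Z \proper Y -> ~~ (Y :\: s \subset Z) -> ~~ (s \subset Z) -> c Z = al.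
  have cnot : forall Z, ~~ (s \subset Z) -> c Z <> ga /\ c Z <> de.
    move=> Z sZ; split => cZ.
    - by move: sZ; rewrite (Gs Z cZ) subxx.
    - by move: sZ; rewrite (pS (Dab Z cZ)).
  have claim1 : forall Z, Z \proper Y -> ~~ (Y :\: s \subset Z) -> ~~ (s \subset Z) ->
      ~~ (Z \subset s) -> c Z = al.
    move=> Z ZY YsZ sZ Zs; have [c1 c2] := cnot Z sZ.
    case: (col4 (c Z)) => cZ //; exfalso.
    have [y yYs yZ] := nsubWx YsZ.
    move: yYs; rewrite !inE => /andP[ys yY].
    have [w wZ ws] := nsubWx Zs.
    have [u us uZ] := nsubWx sZ.
    have yU : y \notin Z :|: s by rewrite !inE negb_or yZ.
    have UY : Z :|: s \proper Y.
      by apply: (properW _ yY yU); rewrite subUset (pS ZY) (pS sY).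
    have sU : s \proper Z :|: s by apply: (properW (subsetUr Z s) _ ws); rewrite !inE wZ.
    have ZU : Z \proper Z :|: s by apply: (properW (subsetUl Z s) _ uZ); rewrite !inE us orbT.
    have cU : c (Z :|: s) = de by apply: Iv.
    apply: (RB (W1:=set0) (W2:=Z) (W3:=s) (W4:=Z :|: s)) => //; try (apply: ne0; cne).
    + exact: (incompW wZ ws us uZ).
    + rbc.
  move=> Z ZY YsZ sZ.
  case: (boolP (Z \subset s)) => Zs; last by apply: claim1.
  have [c1 c2] := cnot Z sZ.
  case: (col4 (c Z)) => cZ //; exfalso.
  have [y yYs yZ] := nsubWx YsZ.
  move: yYs; rewrite !inE => /andP[ys yY].
  have [y' [y'Y y's y'y]] : exists y', [/\ y' \in Y, y' \notin s & y' != y].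
    case: (eqVneq a y) => [E|ne]; last by exists a.
    by exists b; split => //; rewrite -E eq_sym.
  have [u us uZ] := nsubWx sZ.
  have uy : u != y by apply: contraNneq ys => <-.
  have y'Z : y' \notin Z by apply: subWn Zs y's.
  have y'X : y' \notin y |: Z by apply: notin1U.
  have uX : u \notin y |: Z by apply: notin1U.
  have cX : c (y |: Z) = al.
    apply: claim1.
    - apply: (properW _ y'Y y'X); apply: sub1U2 => //; exact: subset_trans Zs (pS sY).
    - by apply: (nsubW (x := y')) => //; rewrite !inE y's.
    - exact: (nsubW us uX).
    - exact: (nsubW (in1U y Z) ys).
  have cS : c (y |: s) = de.
    apply: Iv; first exact: proper1U.
    apply: (properW _ y'Y (notin1U y'y y's)); apply: sub1U2 => //; exact: pS.
  apply: (RB (W1:=Z) (W2:=y |: Z) (W3:=s) (W4:=y |: s)) => //.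
  - exact: proper1U.
  - exact: (properW Zs us uZ).
  - apply: (properW _ (inU1 y us) uX); apply: sub1U2; first exact: in1U.
    exact: subset_trans Zs (sub1U y s).
  - exact: proper1U.
  - exact: (incompW (in1U y Z) ys us uX).
  - rbc.
exists s, Y; split.
  split => //; rewrite addn2; exact: leq_ltn_trans (proper_card sd) (proper_card dY).
cbv zeta; split.
  apply: (md4_of (k1 := be) (k2 := al) (k3 := de) (k4 := ga)).
  - move=> Z; rewrite !inE subsetT andbT => /andP[h sZ]; apply: F1c => //.
    by move: h; rewrite sZ.
  - move=> Z; rewrite !inE sub0set /= => /orP[/eqP->//|/andP[h /andP[ZY YsZ]]].
    by apply: F2c => //; move: h; rewrite ZY andbT.
  - by move=> Z; rewrite !inE => /andP[]; apply: Iv.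
  - by move=> Z; rewrite !inE => /eqP->.
  - ucol.
move=> Z; rewrite !inE negb_or subsetT andbT => /andP[sZ _].
case: (col4 (c Z)) => cZ.
- right; apply: (hc_of (A := Y)); last by rewrite cZ cY.
  by rewrite !inE eqxx.
- left; apply: (hc_of (A := setT)); last by rewrite cZ Hbe.
  rewrite !inE !subsetT andbT /= subTset.
  by move: YT; rewrite properT => ->.
- by move: sZ; rewrite (Gs Z cZ) subxx.
- by move: sZ; rewrite (pS (Dab Z cZ)).
Qed.

End Col.


Section Gen.
Variable T : finType.
Implicit Types A B X Y Z U V W m M d : {set T}.
Implicit Types F G : {set {set T}}.
Variable c : {set T} -> 'I_4.

Lemma exmin (P : pred {set T}) Z0 : P Z0 -> exists m, P m /\ forall Z, P Z -> #|m| <= #|Z|.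
Proof. move=> h; case: (arg_minnP (fun Z => #|Z|) h) => m Pm H; by exists m. Qed.

Lemma exmax (P : pred {set T}) Z0 : P Z0 -> exists m, P m /\ forall Z, P Z -> #|Z| <= #|m|.
Proof. move=> h; case: (arg_maxnP (fun Z => #|Z|) h) => m Pm H; by exists m. Qed.

Lemma NR_ext (c1 : {set T} -> 'I_4) : (forall Z, c Z = c1 Z) -> no_rainbow_B2 c -> no_rainbow_B2 c1.
Proof.
move=> E H W1 W2 W3 W4 [h1 h2 h3]; apply: (H W1 W2 W3 W4); split => //.
by rewrite !E.
Qed.

Lemma NR_dual : no_rainbow_B2 c -> no_rainbow_B2 (fun Z => c (~: Z)).
Proof.
move=> H W1 W2 W3 W4 [[p12 p13 p24 p34] inc u].
apply: (H (~: W4) (~: W3) (~: W2) (~: W1)); split.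
- by rewrite !properC.
- move: inc; rewrite !setCS => /andP[h1 h2]; by rewrite h1 h2.
- by rewrite -rev_uniq; exact u.
Qed.

End Gen.

Section Tr.
Variable T : finType.
Implicit Types A B X Y Z U V W m M d : {set T}.
Implicit Types F G R : {set {set T}}.
Variable c : {set T} -> 'I_4.
Let cd := fun Z => c (~: Z).

Definition corr F F' := forall Z, (Z \in F) = (~: Z \in F').

Lemma mono_tr F F' : corr F F' -> mono cd F' -> mono c F.
Proof.
move=> E H A B hA hB; have := H (~: A) (~: B); rewrite /cd !setCK; apply; by rewrite -E.
Qed.

Lemma dist_tr F G F' G' : corr F F' -> corr G G' -> distinct_col cd F' G' -> distinct_col c F G.
Proof.
move=> E1 E2 H A B hA hB; have := H (~: A) (~: B); rewrite /cd !setCK; apply; by rewrite -?E1 -?E2.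
Qed.

Lemma md4_tr F1 F2 F3 F4 F1' F2' F3' F4' : corr F1 F1' -> corr F2 F2' -> corr F3 F3' -> corr F4 F4' ->
  mono_distinct4 cd F1' F2' F3' F4' -> mono_distinct4 c F1 F2 F3 F4.
Proof.
move=> E1 E2 E3 E4 [m1 m2 m3 m4 [d12 d13 d14 d23 [d24 d34]]].
split; [exact: mono_tr m1|exact: mono_tr m2|exact: mono_tr m3|exact: mono_tr m4|].
split; [exact: dist_tr d12|exact: dist_tr d13|exact: dist_tr d14|exact: dist_tr d23|].
by split; [exact: dist_tr d24|exact: dist_tr d34].
Qed.

Lemma hc_tr Z F F' : corr F F' -> has_color_of cd (~: Z) F' -> has_color_of c Z F.
Proof.
move=> E [A hA e]; exists (~: A); first by rewrite E setCK.
by move: e; rewrite /cd !setCK.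
Qed.

Lemma rest_tr R R' F1 F2 F1' F2' : corr R R' -> corr F1 F1' -> corr F2 F2' ->
  (forall Z, Z \notin R' -> has_color_of cd Z F1' \/ has_color_of cd Z F2') ->
  forall Z, Z \notin R -> has_color_of c Z F1 \/ has_color_of c Z F2.
Proof.
move=> E E1 E2 H Z; rewrite E => /H [h|h]; [left|right]; exact: hc_tr h.
Qed.

Lemma corr_bigcup (I : {set {set T}}) (f g : {set T} -> {set {set T}}) :
  (forall Y, corr (f Y) (g Y)) -> corr (\bigcup_(Y in I) f Y) (\bigcup_(Y in I) g Y).
Proof.
move=> E Z; apply/bigcupP/bigcupP => [[Y hY hZ]|[Y hY hZ]]; exists Y => //; by rewrite ?E // -E.
Qed.

Lemma corrU F G F' G' : corr F F' -> corr G G' -> corr (F :|: G) (F' :|: G').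
Proof. by move=> E1 E2 Z; rewrite !inE E1 E2. Qed.

Lemma corrD F G F' G' : corr F F' -> corr G G' -> corr (F :\: G) (F' :\: G').
Proof. by move=> E1 E2 Z; rewrite !inE E1 E2. Qed.

Lemma corrU1 A F F' : corr F F' -> corr (A |: F) (~: A |: F').
Proof. by move=> E1 Z; rewrite !inE E1 (inj_eq (@setC_inj T)). Qed.

Lemma corr1 A : corr [set A] [set ~: A].
Proof. by move=> Z; rewrite !inE (inj_eq (@setC_inj T)). Qed.

Lemma corr_imset F : corr (@setC T @: F) F.
Proof.
move=> Z; apply/imsetP/idP => [[X hX ->]|h]; first by rewrite setCK.
by exists (~: Z); rewrite ?setCK.
Qed.

Lemma corr_imset' F : corr F (@setC T @: F).
Proof. by move=> Z; rewrite -[in LHS](setCK Z) -corr_imset. Qed.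

Lemma corr_Bcc X Y : corr (Bcc X Y) (Bcc (~: Y) (~: X)).
Proof. by move=> Z; rewrite !inE setCS andbC setCS. Qed.

Lemma corr_Boo X Y : corr (Boo X Y) (Boo (~: Y) (~: X)).
Proof. by move=> Z; rewrite !inE !properC andbC. Qed.

Lemma corr_Boc X Y : corr (Boc X Y) (Bco (~: Y) (~: X)).
Proof. by move=> Z; rewrite !inE properC setCS andbC. Qed.

Lemma corr_Bco X Y : corr (Bco X Y) (Boc (~: Y) (~: X)).
Proof. by move=> Z; rewrite !inE properC setCS andbC. Qed.

Lemma corr_Bup X Y : corr (Bup X Y) (Bdown (~: Y) (~: X)).
Proof.
move=> Z; rewrite !inE properC subsetT sub0set /= andbT.
congr (_ && _).
rewrite setI_eq0 disjoints_subset subsetC.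
by rewrite [~: X :\: ~: Y]setDE setCK setIC -setDE.
Qed.

Lemma corr_Bdown X Y : corr (Bdown X Y) (Bup (~: Y) (~: X)).
Proof. by move=> Z; rewrite (corr_Bup _ _ (~: Z)) !setCK. Qed.

Lemma bigcup_imsetC (F : {set {set T}}) (g : {set T} -> {set {set T}}) :
  \bigcup_(X in @setC T @: F) g X = \bigcup_(Y in F) g (~: Y).
Proof. by rewrite big_imset //; move=> x y _ _; apply: setC_inj. Qed.

Lemma card_le_T A : #|A| <= #|T|.
Proof. by rewrite -cardsT subset_leq_card // subsetT. Qed.

Lemma tr32 : Type3_2 cd -> Type3_1 c.
Proof.
case=> X0 [Y0 [[p1 p2 p3 p4] H]]; cbv zeta in H; case: H => H1 H2.
exists (~: Y0), (~: X0); split.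
  split.
  - by rewrite -setCT properC.
  - by rewrite properC.
  - by rewrite -setC0 properC.
  - have := cardsC X0; have := cardsC Y0; have := card_le_T Y0; lia.
have e1 : corr (Bcc set0 (~: X0) :\: Bcc (~: Y0) (~: X0)) (Bcc X0 setT :\: Bcc X0 Y0).
  by apply: corrD; [move: (corr_Bcc set0 (~: X0)) | move: (corr_Bcc (~: Y0) (~: X0))];
    rewrite ?setCK ?setC0.
have e2 : corr (~: Y0 |: (Bup (~: Y0) (~: X0) :\: Boc (~: Y0) (~: X0)))
             (Y0 |: (Bdown X0 Y0 :\: Bco X0 Y0)).
  have := corrU1 (~: Y0) (corrD (corr_Bup (~: Y0) (~: X0)) (corr_Boc (~: Y0) (~: X0))).
  by rewrite !setCK.
have e3 : corr (Boo (~: Y0) (~: X0)) (Boo X0 Y0) by move: (corr_Boo (~: Y0) (~: X0)); rewrite !setCK.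
have e4 : corr [set ~: X0] [set X0] by move: (corr1 (~: X0)); rewrite setCK.
have eR : corr (Bcc set0 (~: X0) :|: Bup (~: Y0) (~: X0)) (Bcc X0 setT :|: Bdown X0 Y0).
  by apply: corrU; [move: (corr_Bcc set0 (~: X0)) | move: (corr_Bup (~: Y0) (~: X0))];
    rewrite ?setCK ?setC0.
cbv zeta; split; first exact: (md4_tr e1 e2 e3 e4 H1).
exact: (rest_tr eR e1 e2 H2).
Qed.

Lemma tr41 : Type4_1s cd -> Type4_2 c.
Proof.
case=> X0 [Y0 [TY [[p1 p2 p3 p4] H]]]; cbv zeta in H; case: H => H1 H2.
exists (~: X0), (@setC T @: Y0); split.
  split.
  - have := cardsC X0; lia.
  - have := cardsC X0; lia.
  - case/set0Pn: p3 => Y hY; apply/set0Pn; exists (~: Y); exact: imset_f.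
  - apply/subsetP => X /imsetP[Y hY ->].
    have := subsetP p4 Y hY; rewrite !inE subsetT andbT => XY.
    rewrite -setCT !properC XY andbT properT.
    by apply: contraNneq TY => <-.
have e1 : corr (\bigcup_(X in @setC T @: Y0) (Boc X setT :\: Boc X (~: X0)))
               (\bigcup_(Y in Y0) (Bco set0 Y :\: Bco X0 Y)).
  rewrite bigcup_imsetC; apply: corr_bigcup => Y.
  by apply: corrD; [move: (corr_Boc (~: Y) setT) | move: (corr_Boc (~: Y) (~: X0))];
    rewrite ?setCK ?setCT.
have e2 : corr [set ~: X0] [set X0] by move: (corr1 (~: X0)); rewrite setCK.
have e3 : corr (Bco set0 (~: X0) :\: @setC T @: Y0) (Boc X0 setT :\: Y0).
  apply: corrD; last exact: corr_imset.
  by move: (corr_Bco set0 (~: X0)); rewrite setCK setC0.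
have e4 : corr (@setC T @: Y0) Y0 by exact: corr_imset.
have eR : corr (Bcc set0 (~: X0) :|: \bigcup_(X in @setC T @: Y0) Boc X setT)
               (Bcc X0 setT :|: \bigcup_(Y in Y0) Bco set0 Y).
  apply: corrU; first by move: (corr_Bcc set0 (~: X0)); rewrite setCK setC0.
  rewrite bigcup_imsetC; apply: corr_bigcup => Y.
  by move: (corr_Boc (~: Y) setT); rewrite setCK setCT.
cbv zeta; split; first exact: (md4_tr e1 e2 e3 e4 H1).
exact: (rest_tr eR e1 e3 H2).
Qed.

Lemma tr42 : Type4_2 cd -> Type4_1 c.
Proof.
case=> Y0 [X0 [[p1 p2 p3 p4] H]]; cbv zeta in H; case: H => H1 H2.
exists (~: Y0), (@setC T @: X0); split.
  split.
  - have := cardsC Y0; lia.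
  - have := cardsC Y0; lia.
  - case/set0Pn: p3 => Y hY; apply/set0Pn; exists (~: Y); exact: imset_f.
  - apply/subsetP => X /imsetP[Y hY ->].
    have := subsetP p4 Y hY; rewrite !inE => /andP[_ XY].
    by rewrite properC XY subsetT.
have e1 : corr (\bigcup_(Y in @setC T @: X0) (Bco set0 Y :\: Bco (~: Y0) Y))
               (\bigcup_(X in X0) (Boc X setT :\: Boc X Y0)).
  rewrite bigcup_imsetC; apply: corr_bigcup => Y.
  by apply: corrD; [move: (corr_Bco set0 (~: Y)) | move: (corr_Bco (~: Y0) (~: Y))];
    rewrite ?setCK ?setC0.
have e2 : corr [set ~: Y0] [set Y0] by move: (corr1 (~: Y0)); rewrite setCK.
have e3 : corr (Boc (~: Y0) setT :\: @setC T @: X0) (Bco set0 Y0 :\: X0).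
  apply: corrD; last exact: corr_imset.
  by move: (corr_Boc (~: Y0) setT); rewrite setCK setCT.
have e4 : corr (@setC T @: X0) X0 by exact: corr_imset.
have eR : corr (Bcc (~: Y0) setT :|: \bigcup_(Y in @setC T @: X0) Bco set0 Y)
               (Bcc set0 Y0 :|: \bigcup_(X in X0) Boc X setT).
  apply: corrU; first by move: (corr_Bcc (~: Y0) setT); rewrite setCK setCT.
  rewrite bigcup_imsetC; apply: corr_bigcup => Y.
  by move: (corr_Bco set0 (~: Y)); rewrite setCK setC0.
cbv zeta; split; first exact: (md4_tr e1 e2 e3 e4 H1).
exact: (rest_tr eR e1 e3 H2).
Qed.

Lemma mono_tr' F F' : corr F F' -> mono c F -> mono cd F'.
Proof.
move=> E H A B hA hB; rewrite /cd; apply: H; by rewrite E setCK.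
Qed.

Lemma dist_tr' F G F' G' : corr F F' -> corr G G' -> distinct_col c F G -> distinct_col cd F' G'.
Proof.
move=> E1 E2 H A B hA hB; rewrite /cd; apply: H; by rewrite ?E1 ?E2 setCK.
Qed.

Lemma md4_tr' F1 F2 F3 F4 F1' F2' F3' F4' : corr F1 F1' -> corr F2 F2' -> corr F3 F3' -> corr F4 F4' ->
  mono_distinct4 c F1 F2 F3 F4 -> mono_distinct4 cd F1' F2' F3' F4'.
Proof.
move=> E1 E2 E3 E4 [m1 m2 m3 m4 [d12 d13 d14 d23 [d24 d34]]].
split; [exact: mono_tr' m1|exact: mono_tr' m2|exact: mono_tr' m3|exact: mono_tr' m4|].
split; [exact: dist_tr' d12|exact: dist_tr' d13|exact: dist_tr' d14|exact: dist_tr' d23|].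
by split; [exact: dist_tr' d24|exact: dist_tr' d34].
Qed.

Lemma hc_tr' Z F F' : corr F F' -> has_color_of c Z F -> has_color_of cd (~: Z) F'.
Proof.
move=> E [A hA e]; exists (~: A); first by rewrite -E.
by rewrite /cd !setCK.
Qed.

Lemma rest_tr' R R' F1 F2 F1' F2' : corr R R' -> corr F1 F1' -> corr F2 F2' ->
  (forall Z, Z \notin R -> has_color_of c Z F1 \/ has_color_of c Z F2) ->
  forall Z, Z \notin R' -> has_color_of cd Z F1' \/ has_color_of cd Z F2'.
Proof.
move=> E E1 E2 H Z; rewrite -(setCK Z) -E => /H [h|h]; [left|right]; exact: hc_tr' h.
Qed.

Lemma tr31r : Type3_1 c -> Type3_2 cd.
Proof.
case=> X0 [Y0 [[p1 p2 p3 p4] H]]; cbv zeta in H; case: H => H1 H2.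
exists (~: Y0), (~: X0); split.
  split.
  - by rewrite -setCT properC.
  - by rewrite properC.
  - by rewrite -setC0 properC.
  - have := cardsC X0; have := cardsC Y0; have := card_le_T Y0; lia.
have e1 : corr (Bcc set0 Y0 :\: Bcc X0 Y0) (Bcc (~: Y0) setT :\: Bcc (~: Y0) (~: X0)).
  by apply: corrD; [move: (corr_Bcc set0 Y0); rewrite setC0 | exact: corr_Bcc].
have e2 := corrU1 X0 (corrD (corr_Bup X0 Y0) (corr_Boc X0 Y0)).
have e3 := corr_Boo X0 Y0.
have e4 := corr1 Y0.
have eR : corr (Bcc set0 Y0 :|: Bup X0 Y0) (Bcc (~: Y0) setT :|: Bdown (~: Y0) (~: X0)).
  by apply: corrU; [move: (corr_Bcc set0 Y0); rewrite setC0 | exact: corr_Bup].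
cbv zeta; split; first exact: (md4_tr' e1 e2 e3 e4 H1).
exact: (rest_tr' eR e1 e2 H2).
Qed.

Lemma tr42r : Type4_2 c -> Type4_1 cd.
Proof.
case=> Y0 [XX [[p1 p2 p3 p4] H]]; cbv zeta in H; case: H => H1 H2.
exists (~: Y0), (@setC T @: XX); split.
  split.
  - have := cardsC Y0; lia.
  - have := cardsC Y0; lia.
  - case/set0Pn: p3 => Y hY; apply/set0Pn; exists (~: Y); exact: imset_f.
  - apply/subsetP => X /imsetP[Y hY ->].
    have := subsetP p4 Y hY; rewrite !inE => /andP[_ XY].
    by rewrite properC XY subsetT.
have e1 : corr (\bigcup_(X in XX) (Boc X setT :\: Boc X Y0))
               (\bigcup_(Y in @setC T @: XX) (Bco set0 Y :\: Bco (~: Y0) Y)).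
  rewrite bigcup_imsetC; apply: corr_bigcup => X.
  by apply: corrD; [move: (corr_Boc X setT); rewrite setCT | exact: corr_Boc].
have e2 := corr1 Y0.
have e3 : corr (Bco set0 Y0 :\: XX) (Boc (~: Y0) setT :\: @setC T @: XX).
  apply: corrD; last exact: corr_imset'.
  by move: (corr_Bco set0 Y0); rewrite setC0.
have e4 : corr XX (@setC T @: XX) by exact: corr_imset'.
have eR : corr (Bcc set0 Y0 :|: \bigcup_(X in XX) Boc X setT)
               (Bcc (~: Y0) setT :|: \bigcup_(Y in @setC T @: XX) Bco set0 Y).
  apply: corrU; first by move: (corr_Bcc set0 Y0); rewrite setC0.
  rewrite bigcup_imsetC; apply: corr_bigcup => X.
  by move: (corr_Boc X setT); rewrite setCT.
cbv zeta; split; first exact: (md4_tr' e1 e2 e3 e4 H1).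
exact: (rest_tr' eR e1 e3 H2).
Qed.

End Tr.

Section Col2.
Variable T : finType.
Implicit Types A B X Y Z U V W m M d : {set T}.
Implicit Types F G : {set {set T}}.
Variable c : {set T} -> 'I_4.
Hypothesis NR : no_rainbow_B2 c.
Variables al be ga de : 'I_4.
Hypotheses (Hal : c set0 = al) (Hbe : c setT = be).
Hypotheses (Hab : al != be) (Hag : al != ga) (Had : al != de) (Hbg : be != ga) (Hbd : be != de) (Hgd : ga != de).

Let cd := fun Z => c (~: Z).
Let NRd : no_rainbow_B2 cd := NR_dual NR.
Let Hald : cd set0 = be. Proof. by rewrite /cd setC0. Qed.
Let Hbed : cd setT = al. Proof. by rewrite /cd setCT. Qed.
Let Hba : be != al. Proof. by rewrite eq_sym. Qed.

Let col4_ := col4 NR Hal Hbe Hab Hag Had Hbg Hbd Hgd.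
Let RB_ := RB NR Hal Hbe Hab Hag Had Hbg Hbd Hgd.
Let ne0_ := ne0 NR Hal Hbe Hab Hag Had Hbg Hbd Hgd.
Let neT_ := neT NR Hal Hbe Hab Hag Had Hbg Hbd Hgd.
Let cross_ := cross NR Hal Hbe Hab Hag Had Hbg Hbd Hgd.
Let neqc_ := neqc NR Hal Hbe Hab Hag Had Hbg Hbd Hgd.

Ltac setc := repeat match goal with H : c ?A = _ |- context [c ?A] => rewrite H end.
Ltac cne := match goal with |- c ?A <> _ => setc; apply/eqP; neqs end.
Ltac rbc := setc; ucol.

Lemma comparable_gd g d : c g = ga -> c d = de -> g \subset d \/ d \subset g.
Proof.
move=> cg cd0; case: (comp_cases g d) => [h|[h|h]]; [by left|by right|].
by case: (cross_ cg cd0 h).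
Qed.

Lemma T2 m M : c m = ga -> c M = ga -> (forall Z, inP c ga de Z -> #|m| <= #|Z|) ->
  (forall Z, inP c ga de Z -> #|Z| <= #|M|) -> (exists d, c d = de) -> Type2 c.
Proof.
move=> cm cM minm maxM [d cd0].
have Dc : forall Z, c Z = de -> m \proper Z /\ Z \proper M.
  move=> Z cZ; split.
  - case: (comparable_gd cm cZ) => h.
      by apply: sub_ne_proper h _; apply: neqc_; rewrite cm cZ; apply/eqP.
    have : Z \proper m by apply: sub_ne_proper h _; apply: neqc_; rewrite cm cZ; apply/eqP; neqs.
    by move/proper_card; rewrite ltnNge minm //; right.
  - case: (comparable_gd cM cZ) => h; last first.
      by apply: sub_ne_proper h _; apply: neqc_; rewrite cM cZ; apply/eqP; neqs.
    have : M \proper Z by apply: sub_ne_proper h _; apply: neqc_; rewrite cM cZ; apply/eqP.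
    by move/proper_card; rewrite ltnNge maxM //; right.
have [md dM] := Dc d cd0.
have mM := proper_trans md dM.
have MT : M \proper setT by apply: neT_; cne.
have [x xd xm] := properWx md.
have [y yM yd] := properWx dM.
have xM : x \in M by apply: subW (pS dM) xd.
have ym : y \notin m by apply: subWn (pS md) yd.
have xy : x != y by apply: contraNneq yd => <-.
have Iv : forall Z, m \proper Z -> Z \proper M -> c Z = de.
  apply: (fill (P := fun Z => c Z = de) md dM cd0).
  move=> Z W mZ ZM mW WM cW iZW.
  case: (col4_ (c Z)) => cZ //; exfalso.
  - apply: (RB_ (W1:=m) (W2:=Z) (W3:=W) (W4:=setT)) => //.
    + exact: proper_trans ZM MT.
    + exact: proper_trans WM MT.
    + rbc.
  - by apply: (RB_ (W1:=set0) (W2:=Z) (W3:=W) (W4:=M)) => //; try (apply: ne0_; cne); rbc.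
  - by apply: (cross_ cZ cW).
have atomI : forall z w, z \in M -> z \notin m -> w \in M -> w \notin m -> w != z ->
    c (z |: m) = de.
  move=> z w zM zm wM wm wz; apply: Iv; first exact: proper1U.
  by apply: (properW _ wM (notin1U wz wm)); apply: sub1U2 => //; apply: pS.
have Gc : forall g, c g = ga -> g = m \/ g = M.
  move=> g cg.
  have Up : forall z w, z \in M -> z \notin m -> w \in M -> w \notin m -> w != z ->
      z |: m \subset g -> g = M.
    move=> z w zM zm wM wm wz zg.
    have Mg : M \subset g.
      apply/subsetP => v vM.
      case: (boolP (v \in m)) => vm; first by apply: subW zg _; apply: inU1.
      case: (eqVneq v z) => [->|vz]; first by apply: subW zg _; apply: in1U.
      have cv := atomI v z vM vm zM zm ltac:(by rewrite eq_sym).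
      case: (comparable_gd cg cv) => h; last by apply: subW h _; apply: in1U.
      have := subW h (subW zg (in1U z m)); rewrite !inE (negbTE zm) orbF => /eqP E.
      by move: vz; rewrite E eqxx.
    apply/eqP; rewrite eq_sym eqEcard Mg /= maxM //; by left.
  have cx := atomI x y xM xm yM ym ltac:(by rewrite eq_sym).
  have cy := atomI y x yM ym xM xm xy.
  case: (comparable_gd cg cx) => hx; last by right; apply: (Up x y xM xm yM ym _ hx); rewrite eq_sym.
  case: (comparable_gd cg cy) => hy; last by right; apply: (Up y x yM ym xM xm xy hy).
  left; apply/eqP; rewrite eqEcard minm; last by left.
  rewrite andbT; apply/subsetP => v vg.
  have := subW hx vg; have := subW hy vg; rewrite !inE.
  case/orP => [/eqP Ey|//]; case/orP => [/eqP Ex|//].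
  by move: xy; rewrite -Ex -Ey eqxx.
have low := T2_low NR Hal Hbe Hab Hag Had Hbg Hbd Hgd cm cM mM Gc Iv Dc xy xM xm yM ym.
have high : forall Z, m \subset Z -> ~~ (Z \subset M) -> c Z = be.
  have h := T2_low NRd Hald Hbed Hba Hbg Hbd Hag Had Hgd (m := ~: M) (M := ~: m) (x := x) (y := y).
  move=> Z mZ ZM; rewrite -(setCK Z); apply: h.
  - by rewrite /cd setCK.
  - by rewrite /cd setCK.
  - by rewrite properC.
  - move=> Z' cZ'; case: (Gc _ cZ') => E; [right|left]; by rewrite -E setCK.
  - by move=> Z' h1 h2; apply: Iv; [rewrite -properCr | rewrite -properCl].
  - by move=> Z' cZ'; have [h1 h2] := Dc _ cZ'; rewrite properCl properCr.
  - exact: xy.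
  - by rewrite inE xm.
  - by rewrite inE negbK.
  - by rewrite inE ym.
  - by rewrite inE negbK.
  - by rewrite setCS.
  - by rewrite setCS.
have m0 : set0 \proper m by apply: ne0_; cne.
have m0' : ~~ (m \subset set0) by rewrite subset0 -proper0.
have MT' : ~~ (setT \subset M) by rewrite subTset -properT.
have cF1 : forall Z, Z \in Bcc set0 M :\: Bcc m M -> c Z = al.
  move=> Z; rewrite !inE => /andP[h /andP[_ ZM]]; apply: low => //.
  by move: h; rewrite ZM andbT.
have cF2 : forall Z, Z \in [set m; M] -> c Z = ga by move=> Z; rewrite !inE => /orP[]/eqP->.
have cF3 : forall Z, Z \in Boo m M -> c Z = de by move=> Z; rewrite !inE => /andP[]; apply: Iv.
have cF4 : forall Z, Z \in Bcc m setT :\: Bcc m M -> c Z = be.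
  move=> Z; rewrite !inE => /andP[h /andP[mZ _]]; apply: high => //.
  by move: h; rewrite mZ.
exists m, M; split.
  split => //; rewrite addn2; exact: leq_ltn_trans (proper_card md) (proper_card dM).
cbv zeta; split.
  split; try (by apply: mono_of; eassumption).
  split; try (by apply: dist_of; [eassumption|eassumption|neqs]).
  by split; apply: dist_of; [eassumption|eassumption|neqs|eassumption|eassumption|neqs].
move=> Z; rewrite !inE negb_or sub0set /= => /andP[ZM mZ].
case: (col4_ (c Z)) => cZ.
- left; apply: (hc_of (A := set0)); last by rewrite cZ Hal.
  by rewrite !inE !sub0set (negbTE m0').
- right; apply: (hc_of (A := setT)); last by rewrite cZ Hbe.
  by rewrite !inE !subsetT (negbTE MT').
- by case: (Gc _ cZ) => E; move: mZ ZM; rewrite E ?(pS mM) subxx.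
- have [h1 h2] := Dc _ cZ; by move: mZ ZM; rewrite ?(pS h1) ?(pS h2).
Qed.

Lemma B42 s d : c s = ga -> (forall Z, c Z = ga -> Z = s) -> (forall Z, c Z = de -> s \proper Z) ->
  c d = de -> (forall Z, c Z = de -> Z = d) -> (forall Z, Z \proper d -> c Z <> be) -> Type4_2 c.
Proof.
move=> cs Gs Dab cd0 Dd nobe.
have sd := Dab d cd0.
have dT : d \proper setT by apply: neT_; cne.
have s0 : set0 \proper s by apply: ne0_; cne.
have LF := L_F1 NRd Hald Hbed Hba Hbd Hbg Had Hag ltac:(by rewrite eq_sym) (s := ~: d) (Y := ~: s).
have F1c : forall Z, s \proper Z -> ~~ (Z \subset d) -> c Z = be.
  move=> Z sZ Zd; rewrite -(setCK Z); apply: LF.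
  - by rewrite /cd setCK.
  - by move=> Z' cZ'; rewrite -(Dd _ cZ') setCK.
  - by move=> Z' cZ'; rewrite -(setCK Z') (Gs _ cZ') properC.
  - by rewrite /cd setCK.
  - by rewrite properC.
  - by rewrite properC.
  - by rewrite setCS.
exists d, [set s]; split.
  split.
  - have := proper_card sd; have := proper_card s0; rewrite cards0; lia.
  - have := proper_card dT; rewrite cardsT; lia.
  - by apply/set0Pn; exists s; rewrite inE.
  - by rewrite sub1set !inE s0 sd.
cbv zeta; rewrite big_set1; split.
  apply: (md4_of (k1 := be) (k2 := de) (k3 := al) (k4 := ga)).
  - move=> Z; rewrite !inE subsetT andbT => /andP[h sZ]; apply: F1c => //.
    by move: h; rewrite sZ.
  - by move=> Z; rewrite inE => /eqP->.
  - move=> Z; rewrite !inE sub0set /= => /andP[Zs Zd].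
    case: (col4_ (c Z)) => cZ //; exfalso.
    + exact: (nobe Z Zd cZ).
    + by move: Zs; rewrite (Gs Z cZ) eqxx.
    + by move: Zd; rewrite (Dd Z cZ) properxx.
  - by move=> Z; rewrite inE => /eqP->.
  - ucol.
move=> Z; rewrite big_set1 !inE negb_or sub0set subsetT andbT /= => /andP[Zd sZ].
case: (col4_ (c Z)) => cZ.
- right; apply: (hc_of (A := set0)); last by rewrite cZ Hal.
  rewrite !inE sub0set (proper_trans s0 sd) andbT eq_sym.
  by rewrite andbT -proper0.
- left; apply: (hc_of (A := setT)); last by rewrite cZ Hbe.
  rewrite !inE !subsetT andbT /= (proper_trans sd dT) subTset andbT.
  by move: dT; rewrite properT.
- by move: Zd; rewrite (Gs Z cZ) (pS sd).
- by move: Zd; rewrite (Dd Z cZ) subxx.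
Qed.

Lemma coreUp s d : c s = ga -> (forall Z, c Z = ga -> Z = s) -> (forall Z, c Z = de -> s \proper Z) ->
  c d = de -> Type4_1s c \/ Type4_2 c \/ Type3_2 c.
Proof.
move=> cs Gs Dab cd0.
case: (classic (exists Y d', [/\ c Y = al, s \proper Y, c d' = de & Y \proper d'])).
  case=> Y [d' [cY sY cd' Yd']].
  have [Dd nobe] := L_Yd NR Hal Hbe Hab Hag Had Hbg Hbd Hgd cs Gs Dab cY cd' sY Yd'.
  by right; left; apply: (B42 cs Gs Dab cd' Dd nobe).
move=> nYd.
case: (classic (exists Y, c Y = al /\ s \proper Y)).
  case=> Y [cY sY]; right; right.
  apply: (B32 NR Hal Hbe Hab Hag Had Hbg Hbd Hgd cs Gs Dab cY sY cd0).
  move=> Y' d' cY' sY' cd'.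
  case: (C1 NR Hal Hbe Hab Hag Had Hbg Hbd Hgd cs cY' cd' sY' (Dab d' cd')) => h.
    exfalso; apply: nYd; exists Y', d'; split => //.
    by apply: sub_ne_proper h _; apply: neqc_; rewrite cY' cd'; apply/eqP.
  by apply: sub_ne_proper h _; apply: neqc_; rewrite cY' cd'; apply/eqP; neqs.
move=> nY; left.
apply: (B41 NR Hal Hbe Hab Hag Had Hbg Hbd Hgd cs Gs Dab cd0).
by move=> Z sZ cZ; apply: nY; exists Z.
Qed.

End Col2.

Section Col3.
Variable T : finType.
Implicit Types A B X Y Z U V W m M d : {set T}.
Implicit Types F G : {set {set T}}.
Variable c : {set T} -> 'I_4.
Hypothesis NR : no_rainbow_B2 c.
Variables al be ga de : 'I_4.
Hypotheses (Hal : c set0 = al) (Hbe : c setT = be).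
Hypotheses (Hab : al != be) (Hag : al != ga) (Had : al != de) (Hbg : be != ga) (Hbd : be != de) (Hgd : ga != de).

Let cd := fun Z => c (~: Z).
Let NRd : no_rainbow_B2 cd := NR_dual NR.
Let Hald : cd set0 = be. Proof. by rewrite /cd setC0. Qed.
Let Hbed : cd setT = al. Proof. by rewrite /cd setCT. Qed.
Let Hba : be != al. Proof. by rewrite eq_sym. Qed.
Let Hdg : de != ga. Proof. by rewrite eq_sym. Qed.

Lemma coreDown s d : c s = ga -> (forall Z, c Z = ga -> Z = s) -> (forall Z, c Z = de -> Z \proper s) ->
  c d = de -> Type4_2 c \/ Type4_1 c \/ Type3_1 c.
Proof.
move=> cs Gs Dbe cd0.
have := coreUp NRd Hald Hbed Hba Hbg Hbd Hag Had Hgd (s := ~: s) (d := ~: d).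
case.
- by rewrite /cd setCK.
- by move=> Z h; rewrite -(Gs _ h) setCK.
- by move=> Z h; rewrite properCl; apply: Dbe.
- by rewrite /cd setCK.
- by move/tr41; left.
- by case=> [/tr42|/tr32]; [right; left | right; right].
Qed.

Lemma caseA s : c s = ga -> (forall Z, c Z = ga -> Z = s) -> (exists d, c d = de) ->
  Type2 c \/ Type3_1 c \/ Type3_2 c \/ Type4_1 c \/ Type4_2 c.
Proof.
move=> cs Gs [d cd0].
have cmp : forall Z, c Z = de -> s \proper Z \/ Z \proper s.
  move=> Z cZ; have ne : s != Z by apply/eqP => E; move: cs; rewrite E cZ; apply/eqP; rewrite eq_sym.
  case: (comparable_gd NR Hal Hbe Hab Hag Had Hbg Hbd Hgd cs cZ) => h.
    by left; apply: sub_ne_proper.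
  by right; apply: sub_ne_proper => //; rewrite eq_sym.
case: (classic (exists B, c B = de /\ B \proper s)).
  case=> B [cB Bs].
  have Dbe : forall Z, c Z = de -> Z \proper s.
    move=> Z cZ; case: (cmp Z cZ) => // sZ.
    by case: (CA0 NR Hal Hbe Hab Hag Had Hbg Hbd Hgd cs Gs cB cZ Bs sZ).
  case: (coreDown cs Gs Dbe cd0) => [h|[h|h]]; tauto.
move=> nB.
have Dab : forall Z, c Z = de -> s \proper Z.
  move=> Z cZ; case: (cmp Z cZ) => // Zs; exfalso; apply: nB; by exists Z.
case: (coreUp NR Hal Hbe Hab Hag Had Hbg Hbd Hgd cs Gs Dab cd0) => [/T41s_T41 h|[h|h]]; tauto.
Qed.

Lemma caseB A A' B B' : c A = ga -> c A' = ga -> A != A' -> c B = de -> c B' = de -> B != B' ->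
  Type2 c.
Proof.
move=> cA cA' nA cB cB' nB.
pose P := fun Z => (c Z == ga) || (c Z == de).
have PA : P A by rewrite /P cA eqxx.
have [m [Pm minm]] := exmin PA.
have [M [PM maxM]] := exmax PA.
have inPP : forall Z, inP c ga de Z -> P Z by move=> Z [h|h]; rewrite /P h eqxx ?orbT.
have inPP' : forall Z, inP c de ga Z -> P Z by move=> Z [h|h]; rewrite /P h eqxx ?orbT.
have min1 : forall Z, inP c ga de Z -> #|m| <= #|Z| by move=> Z /inPP; apply: minm.
have max1 : forall Z, inP c ga de Z -> #|Z| <= #|M| by move=> Z /inPP; apply: maxM.
have min2 : forall Z, inP c de ga Z -> #|m| <= #|Z| by move=> Z /inPP'; apply: minm.
have max2 : forall Z, inP c de ga Z -> #|Z| <= #|M| by move=> Z /inPP'; apply: maxM.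
move: Pm PM; rewrite /P => /orP[]/eqP cm /orP[]/eqP cM.
- by apply: (T2 NR Hal Hbe Hab Hag Had Hbg Hbd Hgd cm cM min1 max1); exists B.
- by case: (ACK NR Hal Hbe Hab Hag Had Hbg Hbd Hgd cm cM min1 max1 cA cA' cB cB' nA nB).
- by case: (ACK NR Hal Hbe Hab Had Hag Hbd Hbg Hdg cm cM min2 max2 cB cB' cA cA' nB nA).
- by apply: (T2 NR Hal Hbe Hab Had Hag Hbd Hbg Hdg cm cM min2 max2); exists A.
Qed.

End Col3.

Lemma two_more (a b : 'I_4) : a != b -> exists g d : 'I_4, uniq [:: a; b; g; d].
Proof.
move=> ab.
set S := ~: [set a; b].
have cS : #|S| = 2.
  have := cardsC [set a; b]; rewrite cards2 ab card_ord => h.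
  by apply/eqP; rewrite -(eqn_add2l 2); apply/eqP.
have [g gS] : exists g, g \in S by apply/card_gt0P; rewrite cS.
have [d dS] : exists d, d \in S :\ g.
  apply/card_gt0P; move: cS; rewrite (cardsD1 g S) gS => h.
  by rewrite -(ltn_add2l 1) h.
exists g, d.
move: gS dS; rewrite !inE !negb_or => /andP[ga gb] /andP[dg /andP[da db]].
ucol.
Qed.

Lemma uniq4P (a b g d : 'I_4) : uniq [:: a; b; g; d] ->
  [/\ a != b, a != g, a != d, b != g & (b != d) /\ (g != d)].
Proof.
move=> u.
have h : forall x y : 'I_4, x = y -> x != y -> False by move=> x y -> /eqP.
split; try split; apply/negP => /eqP E; move: u; rewrite E /= !inE !eqxx ?orbT ?andbF //.
Qed.

Lemma onlyif (T : finType) (c : {set T} -> 'I_4) : exact_coloring c -> c set0 <> c setT ->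
  no_rainbow_B2 c -> Type2 c \/ Type3_1 c \/ Type3_2 c \/ Type4_1 c \/ Type4_2 c.
Proof.
move=> ex ne NR.
have ab : c set0 != c setT by apply/eqP.
have [ga [de /uniq4P [Hab Hag Had Hbg [Hbd Hgd]]]] := two_more ab.
have Hdg : de != ga by rewrite eq_sym.
have [A cA] := ex ga.
have [B cB] := ex de.
case: (classic (exists A1 A2, [/\ c A1 = ga, c A2 = ga & A1 != A2])); last first.
  move=> nG; apply: (caseA NR erefl erefl Hab Hag Had Hbg Hbd Hgd cA); last by exists B.
  move=> Z cZ; apply/eqP/negPn/negP => nZ; apply: nG; by exists Z, A.
case=> A1 [A2 [cA1 cA2 nA]].
case: (classic (exists B1 B2, [/\ c B1 = de, c B2 = de & B1 != B2])); last first.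
  move=> nD; apply: (caseA NR erefl erefl Hab Had Hag Hbd Hbg Hdg cB); last by exists A.
  move=> Z cZ; apply/eqP/negPn/negP => nZ; apply: nD; by exists Z, B.
case=> B1 [B2 [cB1 cB2 nB]].
by left; apply: (caseB NR erefl erefl Hab Hag Had Hbg Hbd Hgd cA1 cA2 nA cB1 cB2 nB).
Qed.

Lemma all_colors (x1 x2 x3 x4 k : 'I_4) : uniq [:: x1; x2; x3; x4] ->
  [\/ k = x1, k = x2, k = x3 | k = x4].
Proof.
move=> U.
have : k \in [:: x1; x2; x3; x4].
  apply/negPn/negP => xn.
  have U5 : uniq [:: k; x1; x2; x3; x4] by rewrite cons_uniq xn U.
  have := max_card (mem [:: k; x1; x2; x3; x4]).
  by rewrite (card_uniqP U5) card_ord.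
rewrite !inE; case/orP => [/eqP->|]; first by constructor 1.
case/orP => [/eqP->|]; first by constructor 2.
case/orP => [/eqP->|/eqP->]; first by constructor 3.
by constructor 4.
Qed.

Section If.
Variable T : finType.
Implicit Types A B X Y Z U V W m M d : {set T}.
Implicit Types F G R : {set {set T}}.
Variable c : {set T} -> 'I_4.

Lemma rb_swap W1 W2 W3 W4 : rainbow_B2 c W1 W2 W3 W4 -> rainbow_B2 c W1 W3 W2 W4.
Proof.
case=> [[h1 h2 h3 h4] /andP[i1 i2] u]; split => //; first by rewrite i1 i2.
move/uniq4P: u => [a b d e [f g]].
by rewrite /= !inE !negb_or b a d eq_sym f g e.
Qed.

Lemma IF41 : Type4_1 c -> no_rainbow_B2 c.
Proof.
case=> X0 [YY [[p1 p2 p3 p4] H]]; cbv zeta in H.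
case: H => [[m1 m2 m3 m4 [d12 d13 d14 d23 [d24 d34]]] R].
set F1 := \bigcup_(Y in YY) (Bco set0 Y :\: Bco X0 Y) in m1 d12 d13 d14 R.
set F3 := Boc X0 setT :\: YY in m3 d13 d23 d34 R.
have [Y1 hY1] := set0Pn _ p3.
have X0Y : forall Y, Y \in YY -> X0 \proper Y.
  by move=> Y hY; have := subsetP p4 Y hY; rewrite !inE => /andP[].
have inF1 : forall Z Y, Y \in YY -> Z \proper Y -> ~~ (X0 \subset Z) -> Z \in F1.
  move=> Z Y hY ZY h; apply/bigcupP; exists Y => //.
  by rewrite !inE sub0set ZY negb_and h.
have X0n0 : ~~ (X0 \subset set0) by rewrite subset0 -card_gt0.
have F1e : set0 \in F1 by apply: (inF1 _ Y1) => //; apply: sub_proper_trans (X0Y _ hY1); exact: sub0set.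
have X0in : X0 \in [set X0] by rewrite inE.
have upA : forall Z, X0 \subset Z -> c Z <> c set0.
  move=> Z XZ; case: (eqVneq Z X0) => [->|ne]; first by apply/nesym/(d12 _ _ F1e X0in).
  have XZp : X0 \proper Z by apply: sub_ne_proper XZ _; rewrite eq_sym.
  case: (boolP (Z \in YY)) => hZ; first by apply/nesym/(d14 _ _ F1e hZ).
  by apply/nesym/(d13 _ _ F1e); rewrite !inE hZ XZp subsetT.
have cls : forall Z, Z != X0 -> Z \notin YY ->
    [\/ Z \in F1, Z \in F3 | (has_color_of c Z F1 \/ has_color_of c Z F3)].
  move=> Z nX nY.
  case: (boolP (X0 \subset Z)) => XZ.
    by constructor 2; rewrite !inE nY subsetT andbT; apply: sub_ne_proper XZ _; rewrite eq_sym.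
  case: (boolP (Z \in \bigcup_(Y in YY) Bco set0 Y)) => hb.
    case/bigcupP: hb => Y hY; rewrite !inE sub0set /= => ZY.
    by constructor 1; apply: inF1 ZY XZ.
  by constructor 3; apply: R; rewrite !inE negb_or subsetT andbT XZ.
have colX : forall Z, c Z = c X0 -> Z = X0.
  move=> Z cZ; apply/eqP/negPn/negP => nX.
  case: (boolP (Z \in YY)) => hY; first by apply: (d24 _ _ X0in hY).
  case: (cls Z nX hY) => [h|h|[[A hA e]|[A hA e]]].
  - by apply: (d12 _ _ h X0in).
  - by apply: (d23 _ _ X0in h).
  - by apply: (d12 _ _ hA X0in); rewrite -e.
  - by apply: (d23 _ _ X0in hA); rewrite -e.
have colY : forall Z, c Z = c Y1 -> Z \in YY.
  move=> Z cZ; apply/negPn/negP => nY.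
  case: (eqVneq Z X0) => [E|nX]; first by apply: (d24 _ _ X0in hY1); rewrite -E.
  case: (cls Z nX nY) => [h|h|[[A hA e]|[A hA e]]].
  - by apply: (d14 _ _ h hY1).
  - by apply: (d34 _ _ h hY1).
  - by apply: (d14 _ _ hA hY1); rewrite -e.
  - by apply: (d34 _ _ hA hY1); rewrite -e.
have key : forall W1 W2 W3 W4, rainbow_B2 c W1 W2 W3 W4 -> W2 = X0 -> False.
  move=> W1 W2 W3 W4 [[h12 h13 h24 h34] /andP[i23 i32] u] E.
  move/uniq4P: (u) => [n12 n13 n14 n23 [n24 n34]].
  case: (all_colors (c Y1) u) => /esym /colY hY.
  - by have := proper_trans (X0Y _ hY) h12; rewrite E properxx.
  - by move: (X0Y _ hY); rewrite E properxx.
  - by move: i23; rewrite E (pS (X0Y _ hY)).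
  have W1F : W1 \in F1.
    apply: (inF1 _ W4) => //; first exact: proper_trans h12 h24.
    by rewrite -E; apply/negP => /(proper_sub_trans h12); rewrite properxx.
  have W3F : W3 \in F1 by apply: (inF1 _ W4) => //; rewrite -E.
  by move: n13; rewrite (m1 _ _ W1F W3F) eqxx.
move=> W1 W2 W3 W4 rb.
have [[h12 h13 h24 h34] /andP[i23 i32] u] := rb.
move/uniq4P: (u) => [n12 n13 n14 n23 [n24 n34]].
case: (all_colors (c X0) u) => /esym /colX E.
- case: (all_colors (c set0) u) => /esym cW; apply: (upA _ _ cW).
  + by rewrite E.
  + by rewrite -E; apply: pS.
  + by rewrite -E; apply: pS.
  + by rewrite -E; apply: pS; apply: proper_trans h12 h24.
- exact: (key _ _ _ _ rb E).
- exact: (key _ _ _ _ (rb_swap rb) E).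
- case: (all_colors (c Y1) u) => /esym /colY hY.
  + by have := proper_trans (X0Y _ hY) (proper_trans h12 h24); rewrite E properxx.
  + by have := proper_trans (X0Y _ hY) h24; rewrite E properxx.
  + by have := proper_trans (X0Y _ hY) h34; rewrite E properxx.
  + by move: (X0Y _ hY); rewrite E properxx.
Qed.

Lemma interior_ex (X0 Y0 : {set T}) : X0 \proper Y0 -> #|X0| + 2 <= #|Y0| -> exists I : {set T}, X0 \proper I /\ I \proper Y0.
Proof.
move=> XY cXY; have [x xY xX] := properWx XY.
exists (x |: X0); split; first exact: proper1U.
rewrite properEcard sub1U2 ?(pS XY) //= cardsU1 xX; lia.
Qed.

Lemma notYX (X0 Y0 W W4 : {set T}) : X0 \subset W4 -> W4 \proper Y0 -> W \subset W4 -> ~~ (Y0 :\: X0 \subset W).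
Proof.
move=> XW4 W4Y WW4; apply/negP => h.
have : Y0 \subset W4.
  apply/subsetP => y yY; case: (boolP (y \in X0)) => yX; first exact: subW XW4 yX.
  by apply: subW WW4 _; apply: subW h _; rewrite !inE yX.
by move/(proper_sub_trans W4Y); rewrite properxx.
Qed.

Lemma IF32 : Type3_2 c -> no_rainbow_B2 c.
Proof.
case=> X0 [Y0 [[p1 p2 p3 p4] H]]; cbv zeta in H.
case: H => [[m1 m2 m3 m4 [d12 d13 d14 d23 [d24 d34]]] R].
set F1 := Bcc X0 setT :\: Bcc X0 Y0 in m1 d12 d13 d14 R.
set F2 := Y0 |: (Bdown X0 Y0 :\: Bco X0 Y0) in m2 d12 d23 d24 R.
have [I [XI IY]] := interior_ex p2 p4.
have II : I \in Boo X0 Y0 by rewrite !inE XI IY.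
have Y0F : Y0 \in F2 by rewrite !inE eqxx.
have TF : setT \in F1.
  by rewrite !inE !subsetT andbT subTset; move: p3; rewrite properT => ->.
have X0in : X0 \in [set X0] by rewrite inE.
have inF1 : forall Z, X0 \subset Z -> ~~ (Z \subset Y0) -> Z \in F1.
  by move=> Z h1 h2; rewrite !inE h1 h2 subsetT.
have inF2 : forall Z, Z \proper Y0 -> ~~ (X0 \subset Z) -> ~~ (Y0 :\: X0 \subset Z) -> Z \in F2.
  by move=> Z h1 h2 h3; rewrite !inE h1 (negbTE h2) h3 sub0set orbT.
have cls : forall Z, [\/ Z = X0 \/ Z = Y0, Z \in Boo X0 Y0, Z \in F1 |
    ~~ (X0 \subset Z) /\ (Z \in F2 \/ (has_color_of c Z F1 \/ has_color_of c Z F2))].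
  move=> Z.
  case: (boolP (X0 \subset Z)) => XZ.
    case: (eqVneq Z X0) => [->|nX]; first by constructor 1; left.
    case: (boolP (Z \subset Y0)) => ZY; last by constructor 3; apply: inF1.
    case: (eqVneq Z Y0) => [->|nY]; first by constructor 1; right.
    by constructor 2; rewrite !inE !sub_ne_proper // eq_sym.
  constructor 4; split => //.
  case: (boolP (Z \in Bdown X0 Y0)) => hb.
    by left; rewrite in_setU1 in_setD hb andbT inE negb_and XZ orbT.
  by right; apply: R; rewrite in_setU negb_or hb andbT inE (negbTE XZ).
have colX : forall Z, c Z = c X0 -> Z = X0.
  move=> Z cZ; case: (cls Z) => [[//|E]|h|h|[_ [h|[[A hA e]|[A hA e]]]]]; exfalso.
  - by apply: (d24 _ _ Y0F X0in); rewrite -cZ E.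
  - by apply: (d34 _ _ h X0in).
  - by apply: (d14 _ _ h X0in).
  - by apply: (d24 _ _ h X0in).
  - by apply: (d14 _ _ hA X0in); rewrite -e.
  - by apply: (d24 _ _ hA X0in); rewrite -e.
have colI : forall Z, c Z = c I -> X0 \proper Z /\ Z \proper Y0.
  move=> Z cZ; case: (cls Z) => [[E|E]|h|h|[_ [h|[[A hA e]|[A hA e]]]]].
  - by exfalso; apply: (d34 _ _ II X0in); rewrite -cZ E.
  - by exfalso; apply: (d23 _ _ Y0F II); rewrite -cZ E.
  - by move: h; rewrite !inE => /andP[].
  - by exfalso; apply: (d13 _ _ h II).
  - by exfalso; apply: (d23 _ _ h II).
  - by exfalso; apply: (d13 _ _ hA II); rewrite -e.
  - by exfalso; apply: (d23 _ _ hA II); rewrite -e.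
have colY : forall Z, c Z = c Y0 -> X0 \subset Z -> Z = Y0.
  move=> Z cZ XZ; case: (cls Z) => [[E|//]|h|h|[h _]]; exfalso.
  - by apply: (d24 _ _ Y0F X0in); rewrite -cZ E.
  - by apply: (d23 _ _ Y0F h); rewrite -cZ.
  - by apply: (d12 _ _ h Y0F).
  - by rewrite XZ in h.
have colT : forall Z, X0 \subset Z -> Z \subset Y0 -> c Z <> c setT.
  move=> Z XZ ZY; case: (cls Z) => [[E|E]|h|h|[h _]].
  - by rewrite E; apply/nesym/(d14 _ _ TF X0in).
  - by rewrite E; apply/nesym/(d12 _ _ TF Y0F).
  - by apply/nesym/(d13 _ _ TF h).
  - by move: h; rewrite !inE XZ ZY.
  - by rewrite XZ in h.
have key : forall W1 W2 W3 W4, rainbow_B2 c W1 W2 W3 W4 -> W2 = X0 -> False.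
  move=> W1 W2 W3 W4 [[h12 h13 h24 h34] /andP[i23 i32] u] E.
  move/uniq4P: (u) => [n12 n13 n14 n23 [n24 n34]].
  case: (all_colors (c I) u) => /esym /colI [XW WY].
  - by have := proper_trans XW h12; rewrite E properxx.
  - by move: XW; rewrite E properxx.
  - by move: i23; rewrite E (pS XW).
  have XW4 : X0 \subset W4 by rewrite -E (pS h24).
  have W1F : W1 \in F2.
    apply: inF2.
    - exact: proper_trans (proper_trans h12 h24) WY.
    - by rewrite -E; apply/negP => /(proper_sub_trans h12); rewrite properxx.
    - exact: notYX XW4 WY (pS (proper_trans h12 h24)).
  have W3F : W3 \in F2.
    apply: inF2; first exact: proper_trans h34 WY.
    - by rewrite -E.
    - exact: notYX XW4 WY (pS h34).
  by move: n13; rewrite (m2 _ _ W1F W3F) eqxx.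
move=> W1 W2 W3 W4 rb.
have [[h12 h13 h24 h34] /andP[i23 i32] u] := rb.
move/uniq4P: (u) => [n12 n13 n14 n23 [n24 n34]].
have h14 := proper_trans h12 h24.
case: (all_colors (c X0) u) => /esym /colX E.
- have XW2 : X0 \subset W2 by rewrite -E (pS h12).
  have XW3 : X0 \subset W3 by rewrite -E (pS h13).
  have XW4 : X0 \subset W4 by rewrite -E (pS h14).
  case: (boolP (W4 \subset Y0)) => W4Y.
    case: (all_colors (c setT) u) => /esym cW; apply: (colT _ _ _ cW).
    + by rewrite E.
    + by rewrite (subset_trans (pS h14)).
    + done.
    + by rewrite (subset_trans (pS h24)).
    + done.
    + by rewrite (subset_trans (pS h34)).
    + done.
    + done.
  case: (all_colors (c Y0) u) => /esym cW.
  + by have := colY _ cW; rewrite E subxx => /(_ isT) EY; move: p2; rewrite EY properxx.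
  + have EY := colY _ cW XW2.
    case: (all_colors (c I) u) => /esym /colI [XW WY].
    * by move: XW; rewrite E properxx.
    * by move: WY; rewrite EY properxx.
    * by move: i32; rewrite EY (pS WY).
    * by move: W4Y; rewrite (pS WY).
  + have EY := colY _ cW XW3.
    case: (all_colors (c I) u) => /esym /colI [XW WY].
    * by move: XW; rewrite E properxx.
    * by move: i23; rewrite EY (pS WY).
    * by move: WY; rewrite EY properxx.
    * by move: W4Y; rewrite (pS WY).
  + by have EY := colY _ cW XW4; move: W4Y; rewrite EY subxx.
- exact: (key _ _ _ _ rb E).
- exact: (key _ _ _ _ (rb_swap rb) E).
- case: (all_colors (c I) u) => /esym /colI [XW WY].
  + by have := proper_trans XW h14; rewrite E properxx.
  + by have := proper_trans XW h24; rewrite E properxx.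
  + by have := proper_trans XW h34; rewrite E properxx.
  + by move: XW; rewrite E properxx.
Qed.


Lemma IF2 : Type2 c -> no_rainbow_B2 c.
Proof.
case=> X0 [Y0 [[p1 p2 p3 p4] H]]; cbv zeta in H.
case: H => [[m1 m2 m3 m4 [d12 d13 d14 d23 [d24 d34]]] R].
set F1 := Bcc set0 Y0 :\: Bcc X0 Y0 in m1 d12 d13 d14 R.
set F4 := Bcc X0 setT :\: Bcc X0 Y0 in m4 d14 d24 d34 R.
have [I [XI IY]] := interior_ex p2 p4.
have II : I \in Boo X0 Y0 by rewrite !inE XI IY.
have E0 : set0 \in F1.
  by rewrite !inE !sub0set andbT subset0 -proper0 p1.
have TF : setT \in F4.
  by rewrite !inE !subsetT andbT subTset; move: p3; rewrite properT => ->.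
have X0in : X0 \in [set X0; Y0] by rewrite !inE eqxx.
have Y0in : Y0 \in [set X0; Y0] by rewrite !inE eqxx orbT.
have cls : forall Z, [\/ Z = X0 \/ Z = Y0, Z \in Boo X0 Y0, Z \in F1 \/ Z \in F4 |
    [/\ ~~ (X0 \subset Z), ~~ (Z \subset Y0) & (has_color_of c Z F1 \/ has_color_of c Z F4)]].
  move=> Z.
  case: (boolP (X0 \subset Z)) => XZ; case: (boolP (Z \subset Y0)) => ZY.
  - case: (eqVneq Z X0) => [->|nX]; first by constructor 1; left.
    case: (eqVneq Z Y0) => [->|nY]; first by constructor 1; right.
    by constructor 2; rewrite !inE !sub_ne_proper // eq_sym.
  - by constructor 3; right; rewrite !inE XZ ZY subsetT.
  - by constructor 3; left; rewrite !inE (negbTE XZ) ZY sub0set.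
  - constructor 4; split => //; apply: R.
    by rewrite !inE negb_or sub0set (negbTE XZ) (negbTE ZY).
have cA : forall Z, X0 \subset Z -> c Z <> c set0.
  move=> Z XZ; case: (cls Z) => [[E|E]|h|[h|h]|[h _ _]].
  - by rewrite E; apply/nesym/(d12 _ _ E0 X0in).
  - by rewrite E; apply/nesym/(d12 _ _ E0 Y0in).
  - by apply/nesym/(d13 _ _ E0 h).
  - by move: h; rewrite !inE XZ /= => /andP[/negP nZY /andP[_ /nZY]].
  - by apply/nesym/(d14 _ _ E0 h).
  - by rewrite XZ in h.
have cB : forall Z, Z \subset Y0 -> c Z <> c setT.
  move=> Z ZY; case: (cls Z) => [[E|E]|h|[h|h]|[_ h _]].
  - by rewrite E; apply: (d24 _ _ X0in TF).
  - by rewrite E; apply: (d24 _ _ Y0in TF).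
  - by apply: (d34 _ _ h TF).
  - by apply: (d14 _ _ h TF).
  - by move: h; rewrite !inE ZY andbT => /andP[/negP n /andP[/n]].
  - by rewrite ZY in h.
have cI : forall Z, c Z = c I -> X0 \proper Z /\ Z \proper Y0.
  move=> Z cZ; case: (cls Z) => [[E|E]|h|[h|h]|[_ _ [[A hA e]|[A hA e]]]].
  - by exfalso; apply: (d23 _ _ X0in II); rewrite -cZ E.
  - by exfalso; apply: (d23 _ _ Y0in II); rewrite -cZ E.
  - by move: h; rewrite !inE => /andP[].
  - by exfalso; apply: (d13 _ _ h II).
  - by exfalso; apply: (d34 _ _ II h).
  - by exfalso; apply: (d13 _ _ hA II); rewrite -e.
  - by exfalso; apply: (d34 _ _ II hA); rewrite -cZ.
have cX : forall Z, c Z = c X0 -> Z = X0 \/ Z = Y0.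
  move=> Z cZ; case: (cls Z) => [//|h|[h|h]|[_ _ [[A hA e]|[A hA e]]]]; exfalso.
  - by apply: (d23 _ _ X0in h).
  - by apply: (d12 _ _ h X0in).
  - by apply: (d24 _ _ X0in h).
  - by apply: (d12 _ _ hA X0in); rewrite -e.
  - by apply: (d24 _ _ X0in hA); rewrite -cZ.
have key : forall W1 W2 W3 W4, rainbow_B2 c W1 W2 W3 W4 -> c W2 = c I -> False.
  move=> W1 W2 W3 W4 [[h12 h13 h24 h34] /andP[i23 i32] u] cW2.
  have [XW WY] := cI _ cW2.
  have h14 := proper_trans h12 h24.
  case: (all_colors (c X0) u) => /esym /cX [E|E].
  - have XW3 : X0 \subset W3 by rewrite -E (pS h13).
    have XW4 : X0 \subset W4 by rewrite -E (pS h14).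
    case: (all_colors (c set0) u) => /esym cW; apply: (cA _ _ cW) => //.
    + by rewrite E.
    + exact: (pS XW).
  - by have := proper_trans h12 WY; rewrite E properxx.
  - by move: XW; rewrite E properxx.
  - by move: WY; rewrite E properxx.
  - by move: i32; rewrite E (pS XW).
  - by move: i23; rewrite E (pS WY).
  - by have := proper_trans XW h24; rewrite E properxx.
  - case: (all_colors (c setT) u) => /esym cW; apply: (cB _ _ cW).
    + by rewrite -E (pS h14).
    + by rewrite -E (pS h24).
    + by rewrite -E (pS h34).
    + by rewrite E.
move=> W1 W2 W3 W4 rb.
have [[h12 h13 h24 h34] /andP[i23 i32] u] := rb.
have h14 := proper_trans h12 h24.
case: (all_colors (c I) u) => /esym cW.
- have [XW WY] := cI _ cW.
  case: (all_colors (c set0) u) => /esym cW'; apply: (cA _ _ cW').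
  + exact: (pS XW).
  + exact: subset_trans (pS XW) (pS h12).
  + exact: subset_trans (pS XW) (pS h13).
  + exact: subset_trans (pS XW) (pS h14).
- exact: (key _ _ _ _ rb cW).
- exact: (key _ _ _ _ (rb_swap rb) cW).
- have [XW WY] := cI _ cW.
  case: (all_colors (c setT) u) => /esym cW'; apply: (cB _ _ cW').
  + exact: subset_trans (pS h14) (pS WY).
  + exact: subset_trans (pS h24) (pS WY).
  + exact: subset_trans (pS h34) (pS WY).
  + exact: (pS WY).
Qed.

End If.

Lemma ifdir (T : finType) (c : {set T} -> 'I_4) :
  Type2 c \/ Type3_1 c \/ Type3_2 c \/ Type4_1 c \/ Type4_2 c -> no_rainbow_B2 c.
Proof.
have back : no_rainbow_B2 (fun Z => c (~: Z)) -> no_rainbow_B2 c.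
  move/NR_dual; apply: NR_ext => Z; by rewrite setCK.
case=> [h|[h|[h|[h|h]]]].
- exact: IF2 h.
- by apply: back; apply: IF32; apply: tr31r.
- exact: IF32 h.
- exact: IF41 h.
- by apply: back; apply: IF41; apply: tr42r.
Qed.

Theorem lemma2p8 (n : nat) (c : {set 'I_n} -> 'I_4) :
  4 <= n ->
  exact_coloring c ->
  c set0 <> c setT ->
  (no_rainbow_B2 c <->
   Type2 c \/ Type3_1 c \/ Type3_2 c \/ Type4_1 c \/ Type4_2 c).
Proof.
move=> _ ex ne; split; first exact: onlyif.
exact: ifdir.
Qed.
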